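(* Let $\mathfrak A$ and $\mathcal A$ be Banach algebras with $\mathcal A$ a Banach $\mathfrak A$-module with compatible actions, and suppose $\mathcal A\widehat\otimes_{\mathfrak A}\mathcal A$ is a commutative Banach $\mathcal A$-$\mathfrak A$-module. Consider: (i) $\mathcal A$ is module pseudo-amenable; (ii) there is a module approximate morphism $(S_l)$ from $\mathcal A/\mathcal J$ into $\mathcal A\widehat\otimes_{\mathfrak A}\mathcal A$ such that $\|\widetilde\omega_{\mathcal A}(S_l(a+\mathcal J))-(a+\mathcal J)\|\to0$ for all $a\in\mathcal A$; (iii) there is a module $w^*$-approximate morphism $(T_l)$ from $(\mathcal A\widehat\otimes_{\mathfrak A}\mathcal A)^*$ into $(\mathcal A/\mathcal J)^*$ such that $T_l\circ\widetilde\omega_{\mathcal A}^*\to\mathrm{id}_{(\mathcal A/\mathcal J)^*}$ in the weak$^*$ operator topology. Then (i) $\Rightarrow$ (ii) $\Rightarrow$ (iii). If in addition $\mathcal A/\mathcal J$ has a central approximate identity, then (i), (ii), (iii) are equivalent.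
   Context: Compatible actions: $\alpha\cdot(ab)=(\alpha\cdot a)b$, $(ab)\cdot\alpha=a(b\cdot\alpha)$. A Banach $\mathcal A$-$\mathfrak A$-module is a Banach $\mathcal A$-bimodule and $\mathfrak A$-bimodule $X$ with $\alpha\cdot(a\cdot x)=(\alpha\cdot a)\cdot x$, $a\cdot(\alpha\cdot x)=(a\cdot\alpha)\cdot x$, $a\cdot(x\cdot\alpha)=(a\cdot x)\cdot\alpha$ and analogous right-hand identities; commutative if $\alpha\cdot x=x\cdot\alpha$. $\mathcal I$ is the closed span of $\{a\cdot\alpha\otimes b-a\otimes\alpha\cdot b\}$ in $\mathcal A\widehat\otimes\mathcal A$, $\mathcal A\widehat\otimes_{\mathfrak A}\mathcal A=(\mathcal A\widehat\otimes\mathcal A)/\mathcal I$ (an $\mathcal A$-bimodule via $c\cdot(a\otimes b)=ca\otimes b$, $(a\otimes b)\cdot c=a\otimes bc$), $\mathcal J$ is the closed ideal of $\mathcal A$ generated by $\{(a\cdot\alpha)b-a(\alpha\cdot b)\}$ ($\mathcal A/\mathcal J$ is an $\mathcal A$-bimodule and $\mathfrak A$-bimodule canonically), $\widetilde\omega_{\mathcal A}(a\otimes b+\mathcal I)=ab+\mathcal J$. $\mathcal A$ is module pseudo-amenable if there is a net $(\widetilde u_j)\subseteq\mathcal A\widehat\otimes_{\mathfrak A}\mathcal A$ with $(\widetilde\omega_{\mathcal A}(\widetilde u_j))$ an approximate identity of $\mathcal A/\mathcal J$ and $a\cdot\widetilde u_j-\widetilde u_j\cdot a\to0$ for all $a\in\mathcal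 A$. For Banach spaces $X,Y$ that are Banach $\mathcal A$-modules and $\mathfrak A$-modules, a module approximate morphism from $X$ to $Y$ is a net $(T_k)$ of bounded linear maps $X\to Y$ with $\|T_k(a\cdot x)-a\cdot T_k(x)\|\to0$, $\|T_k(x\cdot a)-T_k(x)\cdot a\|\to0$, $\|T_k(\alpha\cdot x)-\alpha\cdot T_k(x)\|\to0$, $\|T_k(x\cdot\alpha)-T_k(x)\cdot\alpha\|\to0$ for all $a\in\mathcal A,\alpha\in\mathfrak A,x\in X$; if $Y$ is a dual space and norm convergence is replaced by weak$^*$ convergence, $(T_k)$ is a module $w^*$-approximate morphism. The weak$^*$ operator topology on $B(X,Y^* )$ is given by the seminorms $\Phi\mapsto|\langle\Phi(x),y\rangle|$, $x\in X,y\in Y$. *)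

(* Defs.v *)
(* All normed spaces are normedModType K (norm values in K). *)
From HB Require Import structures.
From mathcomp Require Import all_boot all_order all_algebra.
From mathcomp Require Import all_classical all_reals all_analysis.
From mathcomp Require Export complex.
Import Order.TTheory GRing.Theory Num.Theory.
Import numFieldNormedType.Exports.
Local Open Scope ring_scope.
Local Open Scope classical_set_scope.

Set Implicit Arguments.
Unset Strict Implicit.
Unset Printing Implicit Defensive.

Definition linear_map {K : numFieldType} {X Y : normedModType K} (f : X -> Y) :=
  (forall x y, f (x + y) = f x + f y) /\ (forall (k : K) x, f (k *: x) = k *: f x).

Definition bounded_linear {K : numFieldType} {X Y : normedModType K} (f : X -> Y) :=
  linear_map f /\ exists M : K, 0 <= M /\ forall x, `|f x| <= M * `|x|.

Definition bounded_linear_by {K : numFieldType} {X Y : normedModType K}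
  (f : X -> Y) (M : K) :=
  linear_map f /\ forall x, `|f x| <= M * `|x|.

Definition bilinear_map {K : numFieldType} {X Y Z : normedModType K}
  (m : X -> Y -> Z) :=
  (forall x x' y, m (x + x') y = m x y + m x' y) /\
  (forall (k : K) x y, m (k *: x) y = k *: m x y) /\
  (forall x y y', m x (y + y') = m x y + m x y') /\
  (forall (k : K) x y, m x (k *: y) = k *: m x y).

Definition bilinear_contr {K : numFieldType} {X Y Z : normedModType K}
  (m : X -> Y -> Z) :=
  bilinear_map m /\ forall x y, `|m x y| <= `|x| * `|y|.

(* (A, mul) is a Banach algebra (completeness comes from the type) *)
Definition banach_algebra {K : numFieldType} {A : completeNormedModType K}
  (mul : A -> A -> A) :=
  bilinear_contr mul /\ forall a b c, mul a (mul b c) = mul (mul a b) c.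

Definition banach_bimodule {K : numFieldType} {A X : completeNormedModType K}
  (mul : A -> A -> A) (l : A -> X -> X) (r : X -> A -> X) :=
  bilinear_contr l /\ bilinear_contr r /\
  (forall a b x, l (mul a b) x = l a (l b x)) /\
  (forall a b x, r x (mul a b) = r (r x a) b) /\
  (forall a b x, l a (r x b) = r (l a x) b).

Definition compatible_actions {K : numFieldType} {U A : completeNormedModType K}
  (mulU : U -> U -> U) (mulA : A -> A -> A) (lU : U -> A -> A) (rU : A -> U -> A) :=
  banach_bimodule mulU lU rU /\
  (forall al a b, lU al (mulA a b) = mulA (lU al a) b) /\
  (forall al a b, rU (mulA a b) al = mulA a (rU b al)).

Definition banach_AU_module {K : numFieldType} {U A X : completeNormedModType K}
  (mulU : U -> U -> U) (mulA : A -> A -> A)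
  (lUA : U -> A -> A) (rUA : A -> U -> A)
  (lA : A -> X -> X) (rA : X -> A -> X) (lU : U -> X -> X) (rU : X -> U -> X) :=
  banach_bimodule mulA lA rA /\ banach_bimodule mulU lU rU /\
  (forall al a x, lU al (lA a x) = lA (lUA al a) x) /\
  (forall al a x, lA a (lU al x) = lA (rUA a al) x) /\
  (forall al a x, lA a (rU x al) = rU (lA a x) al) /\
  (forall al a x, rA (rU x al) a = rA x (lUA al a)) /\
  (forall al a x, rA (lU al x) a = lU al (rA x a)) /\
  (forall al a x, rU (rA x a) al = rA x (rUA a al)).

Definition commutative_U_action {K : numFieldType} {U X : normedModType K}
  (lU : U -> X -> X) (rU : X -> U -> X) := forall al x, lU al x = rU x al.

(* (T, tens) is the projective tensor product A \hat\otimes A: tens is a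
   contractive bilinear map, and every bounded bilinear map phi from A x A
   into a Banach space with ||phi(a,b)|| <= M ||a|| ||b|| factors uniquely
   through a bounded linear map of norm <= M. *)
Definition proj_tensor_product {K : numFieldType} {A T : completeNormedModType K}
  (tens : A -> A -> T) :=
  bilinear_contr tens /\
  forall (Y : completeNormedModType K) (phi : A -> A -> Y) (M : K),
    0 <= M -> bilinear_map phi ->
    (forall a b, `|phi a b| <= M * `|a| * `|b|) ->
    exists L : T -> Y,
      bounded_linear_by L M /\ (forall a b, L (tens a b) = phi a b) /\
      forall L' : T -> Y, bounded_linear L' ->
        (forall a b, L' (tens a b) = phi a b) -> L' = L.

Definition subspace {K : numFieldType} {X : normedModType K} (S : set X) :=
  S 0 /\ (forall x y, S x -> S y -> S (x + y)) /\
  (forall (k : K) x, S x -> S (k *: x)).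

Definition closed_span {K : numFieldType} {X : normedModType K} (G : set X) : set X :=
  fun x => forall S : set X, closed S -> subspace S -> G `<=` S -> S x.

Definition closed_ideal_gen {K : numFieldType} {A : normedModType K}
  (mul : A -> A -> A) (G : set A) : set A :=
  fun x => forall S : set A, closed S -> subspace S ->
    (forall a s, S s -> S (mul a s) /\ S (mul s a)) -> G `<=` S -> S x.

(* q : X -> Y is the quotient map of X onto the quotient Banach space X/N
   (with the quotient norm) *)
Definition quotient_map {K : numFieldType} {X Y : normedModType K}
  (N : set X) (q : X -> Y) :=
  linear_map q /\ (forall y, exists x, q x = y) /\
  (forall x, q x = 0 <-> N x) /\
  (forall x, (forall y, N y -> `|q x| <= `|x + y|) /\
             (forall e : K, 0 < e -> exists y, N y /\ `|x + y| < `|q x| + e)).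

Definition directed {I : Type} (le : I -> I -> Prop) :=
  (exists i : I, True) /\ (forall i, le i i) /\
  (forall i j k, le i j -> le j k -> le i k) /\
  (forall i j, exists k, le i k /\ le j k).

Definition net_to0 {K : numFieldType} {I : Type} (le : I -> I -> Prop) (u : I -> K) :=
  forall e : K, 0 < e -> exists i0, forall i, le i0 i -> `|u i| < e.

Definition dual_elt {K : numFieldType} {X : normedModType K} (f : X -> K) :=
  (forall x y, f (x + y) = f x + f y) /\ (forall (k : K) x, f (k *: x) = k * f x) /\
  exists M : K, 0 <= M /\ forall x, `|f x| <= M * `|x|.

Definition dual_bounded_linear {K : numFieldType} {X Y : normedModType K}
  (Phi : (X -> K) -> (Y -> K)) :=
  (forall f, dual_elt f -> dual_elt (Phi f)) /\
  (forall f g, dual_elt f -> dual_elt g -> forall y,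
      Phi (fun x => f x + g x) y = Phi f y + Phi g y) /\
  (forall (k : K) f, dual_elt f -> forall y, Phi (fun x => k * f x) y = k * Phi f y) /\
  exists C : K, 0 <= C /\ forall f (M : K), dual_elt f -> 0 <= M ->
     (forall x, `|f x| <= M * `|x|) -> forall y, `|Phi f y| <= C * M * `|y|.

(* ---------- the three conditions of the theorem ----------
   Notation: A (product mulA) is the Banach algebra, U (= frak A) acts on A by
   lUA, rUA; Q = A \hat\otimes_U A with the A-actions lQ, rQ and U-actions
   lUQ, rUQ; qJ : A -> A/J is the quotient map, mulJ the product of A/J;
   omega : Q -> A/J is \tilde\omega_A.  Elements of A/J are written qJ b
   (qJ is onto); the canonical actions on A/J are
   a.(b+J) = ab+J, (b+J).a = ba+J, al.(b+J) = al.b+J, (b+J).al = b.al+J. *)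

Definition module_pseudo_amenable {K : numFieldType}
  {A Q AJ : normedModType K} (mulA : A -> A -> A)
  (qJ : A -> AJ) (mulJ : AJ -> AJ -> AJ) (omega : Q -> AJ)
  (lQ : A -> Q -> Q) (rQ : Q -> A -> Q) :=
  exists (I : Type) (le : I -> I -> Prop) (u : I -> Q),
    directed le /\
    (forall a, net_to0 le (fun j => `|mulJ (omega (u j)) (qJ a) - qJ a|) /\
               net_to0 le (fun j => `|mulJ (qJ a) (omega (u j)) - qJ a|)) /\
    (forall a, net_to0 le (fun j => `|lQ a (u j) - rQ (u j) a|)).

Definition cond_ii {K : numFieldType}
  {U A Q AJ : normedModType K} (mulA : A -> A -> A)
  (lUA : U -> A -> A) (rUA : A -> U -> A)
  (qJ : A -> AJ) (omega : Q -> AJ)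
  (lQ : A -> Q -> Q) (rQ : Q -> A -> Q) (lUQ : U -> Q -> Q) (rUQ : Q -> U -> Q) :=
  exists (I : Type) (le : I -> I -> Prop) (S : I -> AJ -> Q),
    directed le /\
    (forall l, bounded_linear (S l)) /\
    (forall a b, net_to0 le (fun l => `|S l (qJ (mulA a b)) - lQ a (S l (qJ b))|)) /\
    (forall a b, net_to0 le (fun l => `|S l (qJ (mulA b a)) - rQ (S l (qJ b)) a|)) /\
    (forall al b, net_to0 le (fun l => `|S l (qJ (lUA al b)) - lUQ al (S l (qJ b))|)) /\
    (forall al b, net_to0 le (fun l => `|S l (qJ (rUA b al)) - rUQ (S l (qJ b)) al|)) /\
    (forall a, net_to0 le (fun l => `|omega (S l (qJ a)) - qJ a|)).

(* (iii).  Dual actions: for f in X^*, (a.f)(x) = f(x.a), (f.a)(x) = f(a.x),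
   and likewise for U.  Weak* convergence is pointwise convergence. *)
Definition cond_iii {K : numFieldType}
  {U A Q AJ : normedModType K} (mulA : A -> A -> A)
  (lUA : U -> A -> A) (rUA : A -> U -> A)
  (qJ : A -> AJ) (omega : Q -> AJ)
  (lQ : A -> Q -> Q) (rQ : Q -> A -> Q) (lUQ : U -> Q -> Q) (rUQ : Q -> U -> Q) :=
  exists (I : Type) (le : I -> I -> Prop) (T : I -> (Q -> K) -> (AJ -> K)),
    directed le /\
    (forall l, dual_bounded_linear (T l)) /\
    (forall a f, dual_elt f -> forall b, net_to0 le (fun l =>
        T l (fun x => f (rQ x a)) (qJ b) - T l f (qJ (mulA b a)))) /\
    (forall a f, dual_elt f -> forall b, net_to0 le (fun l =>
        T l (fun x => f (lQ a x)) (qJ b) - T l f (qJ (mulA a b)))) /\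
    (forall al f, dual_elt f -> forall b, net_to0 le (fun l =>
        T l (fun x => f (rUQ x al)) (qJ b) - T l f (qJ (rUA b al)))) /\
    (forall al f, dual_elt f -> forall b, net_to0 le (fun l =>
        T l (fun x => f (lUQ al x)) (qJ b) - T l f (qJ (lUA al b)))) /\
    (* T l \o omega^* --> id in the weak* operator topology *)
    (forall phi, dual_elt phi -> forall b, net_to0 le (fun l =>
        T l (fun x => phi (omega x)) (qJ b) - phi (qJ b))).

Definition has_central_approx_identity {K : numFieldType} {A AJ : normedModType K}
  (qJ : A -> AJ) (mulJ : AJ -> AJ -> AJ) :=
  exists (I : Type) (le : I -> I -> Prop) (e : I -> AJ),
    directed le /\
    (forall l c, mulJ (e l) c = mulJ c (e l)) /\
    (forall a, net_to0 le (fun l => `|mulJ (e l) (qJ a) - qJ a|) /\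
               net_to0 le (fun l => `|mulJ (qJ a) (e l) - qJ a|)).

(* Main.v *)
Require Import Defs.
From HB Require Import structures.
From mathcomp Require Import all_boot all_order all_algebra.
From mathcomp Require Import all_classical all_reals all_analysis.
From mathcomp Require Import complex.
From mathcomp Require Import ring lra.
Import Order.TTheory GRing.Theory Num.Theory.
Import numFieldNormedType.Exports.
Local Open Scope ring_scope.
Local Open Scope classical_set_scope.
Set Implicit Arguments.
Unset Strict Implicit.
Unset Printing Implicit Defensive.
Section RealHB.
Variables (R : realType) (V : lmodType R[i]).
Definition rc (r : R) : R[i] := (r%:C)%C.
Lemma rcD r s : rc (r + s) = rc r + rc s. Proof. exact: rmorphD. Qed.
Lemma rcM r s : rc (r * s) = rc r * rc s. Proof. exact: rmorphM. Qed.
Lemma rc1 : rc 1 = 1. Proof. exact: rmorph1. Qed.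
Lemma rc0 : rc 0 = 0. Proof. exact: rmorph0. Qed.
Lemma rcN r : rc (- r) = - rc r. Proof. exact: rmorphN. Qed.
Lemma rcZZ r s (x : V) : rc r *: (rc s *: x) = rc (r * s) *: x.
Proof. by rewrite scalerA rcM. Qed.
Lemma rcZV r (x : V) : r != 0 -> rc r *: (rc r^-1 *: x) = x.
Proof. by move=> h; rewrite rcZZ mulfV // rc1 scale1r. Qed.

Variable p : V -> R.
Hypothesis p_add : forall x y, p (x + y) <= p x + p y.
Hypothesis p_scal : forall (r : R) x, 0 <= r -> p (rc r *: x) = r * p x.

Definition rsub (D : set V) := D 0 /\ (forall x y, D x -> D y -> D (x + y)) /\
  (forall r x, D x -> D (rc r *: x)).
Definition rlin (D : set V) (f : V -> R) :=
  (forall x y, D x -> D y -> f (x + y) = f x + f y) /\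
  (forall r x, D x -> f (rc r *: x) = r * f x).

Variables (W : set V) (f0 : V -> R).
Hypotheses (HW : rsub W) (Hf0 : rlin W f0) (Hf0p : forall w, W w -> f0 w <= p w).

Definition valid (e : set V * (V -> R)) := rsub e.1 /\ W `<=` e.1 /\ rlin e.1 e.2 /\
  (forall w, W w -> e.2 w = f0 w) /\ (forall x, e.1 x -> e.2 x <= p x).
Definition extb (e1 e2 : set V * (V -> R)) : Prop :=
  e1.1 `<=` e2.1 /\ forall x, e1.1 x -> e1.2 x = e2.2 x.

Lemma rsubN D x : rsub D -> D x -> D (- x).
Proof. by move=> [_ [_ HD]] Dx; rewrite -scaleN1r -rc1 -rcN; apply: HD. Qed.

Section Step.
Variables (D : set V) (f : V -> R) (x : V).
Hypotheses (Hv : valid (D, f)) (Hx : ~ D x).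

Let S := [set y | exists2 d, D d & y = f d - p (d - x)].
Let c := sup S.

Lemma step_bound d d' : D d -> D d' -> f d - p (d - x) <= p (d' + x) - f d'.
Proof.
move: Hv => [HD [_ [[fadd _] [_ fp]]]] /= Dd Dd'.
have h1 : f d + f d' <= p (d - x) + p (d' + x).
  rewrite -fadd //; apply: le_trans (fp _ _) _; first by apply: HD.2.1.
  by have := p_add (d - x) (d' + x); rewrite addrACA addNr addr0.
lra.
Qed.

Lemma c_low d : D d -> f d - p (d - x) <= c.
Proof.
move=> Dd; apply: ub_le_sup; last by exists d.
exists (p (0 + x) - f 0) => y [d' Dd' ->]; apply: step_bound => //.
by case: Hv => [[]].
Qed.

Lemma c_up d' : D d' -> c <= p (d' + x) - f d'.
Proof.
move=> Dd'; apply: ge_sup.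
  by exists (f 0 - p (0 - x)); exists 0 => //; case: Hv => [[]].
by move=> y [d Dd ->]; apply: step_bound.
Qed.

Lemma decomp_uniq d1 d2 t1 t2 : D d1 -> D d2 ->
  d1 + rc t1 *: x = d2 + rc t2 *: x -> t1 = t2 /\ d1 = d2.
Proof.
case: Hv => HD _ Dd1 Dd2 E.
have Ht : t1 = t2.
  apply/eqP; apply/negP => /negP ne.
  have h : rc (t1 - t2) *: x = d2 - d1.
    by rewrite rcD rcN scalerDl scaleNr; apply/eqP; rewrite subr_eq addrAC -E (addrC d1) addrK.
  have : D (rc (t1 - t2)^-1 *: (d2 - d1)).
    by apply: HD.2.2; apply: HD.2.1 => //; apply: rsubN.
  by rewrite -h rcZZ mulVf ?subr_eq0 // rc1 scale1r.
by split=> //; subst; apply: (addIr (rc t2 *: x)).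
Qed.

Definition D' := [set v | exists d t, D d /\ v = d + rc t *: x].
Definition f' (v : V) : R :=
  match pselect (exists dt : V * R, D dt.1 /\ v = dt.1 + rc dt.2 *: x) with
  | left H => let dt := sval (cid H) in f dt.1 + dt.2 * c
  | right _ => 0
  end.

Lemma f'_eq d t : D d -> f' (d + rc t *: x) = f d + t * c.
Proof.
move=> Dd; rewrite /f'; case: pselect => [H|[]]; last by exists (d, t).
case: cid => [[d1 t1] /= [Dd1 E]].
by have [-> ->] := decomp_uniq Dd1 Dd (esym E).
Qed.

Lemma D'_valid : valid (D', f').
Proof.
case: Hv; rewrite /rsub /rlin /= => [[D0 [DD DZ]] [WD [[fD fZ] [fW fp]]]].
split; [|split; [|split; [|split]]] => /=.
- split; first by exists 0, 0; split => //; rewrite rc0 scale0r addr0.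
  split.
    move=> _ _ [d1 [t1 [Dd1 ->]]] [d2 [t2 [Dd2 ->]]].
    exists (d1 + d2), (t1 + t2); split; first exact: DD.
    by rewrite rcD scalerDl addrACA.
  move=> r _ [d [t [Dd ->]]]; exists (rc r *: d), (r * t); split; first exact: DZ.
  by rewrite scalerDr rcZZ.
- by move=> w Ww; exists w, 0; split; [exact: WD | rewrite rc0 scale0r addr0].
- split.
    move=> _ _ [d1 [t1 [Dd1 ->]]] [d2 [t2 [Dd2 ->]]].
    rewrite addrACA -scalerDl -rcD !f'_eq //; last exact: DD.
    by rewrite fD // mulrDl addrACA.
  move=> r _ [d [t [Dd ->]]]; rewrite scalerDr rcZZ !f'_eq //; last exact: DZ.
  by rewrite fZ // mulrDr mulrA.
- move=> w Ww; have := f'_eq 0 (WD _ Ww); rewrite rc0 scale0r addr0 mul0r addr0 => ->.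
  exact: fW.
- move=> _ [d [t [Dd ->]]]; rewrite f'_eq //.
  have [t0|tn0] := eqVneq t 0.
    by rewrite t0 rc0 scale0r addr0 mul0r addr0; apply: fp.
  have [tpos|tneg] := ltP 0 t.
    set d1 := rc t^-1 *: d.
    have Dd1 : D d1 by apply: DZ.
    have hd : d = rc t *: d1 by rewrite /d1 rcZV.
    have h := c_up Dd1.
    have e1 : f d = t * f d1 by rewrite hd fZ.
    have e2 : p (d + rc t *: x) = t * p (d1 + x) by rewrite hd -scalerDr p_scal // ltW.
    rewrite e1 e2; have := ler_wpM2l (ltW tpos) h; rewrite mulrBr; lra.
  have tlt : t < 0 by rewrite lt_neqAle tn0 tneg.
  set s := - t.
  have spos : 0 < s by rewrite /s oppr_gt0.
  set d1 := rc s^-1 *: d.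
  have Dd1 : D d1 by apply: DZ.
  have hd : d = rc s *: d1 by rewrite /d1 rcZV // gt_eqF.
  have ht : t = - s by rewrite /s opprK.
  have h := c_low Dd1.
  have e1 : f d = s * f d1 by rewrite hd fZ.
  have e2 : p (d + rc t *: x) = s * p (d1 - x).
    by rewrite hd ht rcN scaleNr -scalerN -scalerDr p_scal // ltW.
  rewrite e1 e2 ht; have := ler_wpM2l (ltW spos) h; rewrite mulrBr; lra.
Qed.

Lemma D'_ext : extb (D, f) (D', f').
Proof.
case: Hv => _ _; split => /= [d Dd|d Dd].
  by exists d, 0; split => //; rewrite rc0 scale0r addr0.
by have := f'_eq 0 Dd; rewrite rc0 scale0r addr0 mul0r addr0 => ->.
Qed.

Lemma D'_x : D' x.
Proof. by exists 0, 1; split; [case: Hv => [[]]|rewrite rc1 scale1r add0r]. Qed.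

End Step.

Theorem real_HB : exists F : V -> R,
  (forall x y, F (x + y) = F x + F y) /\ (forall r x, F (rc r *: x) = r * F x) /\
  (forall w, W w -> F w = f0 w) /\ (forall x, F x <= p x).
Proof.
pose T := {e : set V * (V -> R) | valid e}.
have v0 : valid (W, f0).
  by split; [|split; [move=> ? //|split; [|split]]].
pose t0 : T := exist _ _ v0.
pose Rl : rel T := fun s t => `[< extb (sval s) (sval t) >].
have [] := @ZL_preorder T t0 Rl.
- by move=> t; apply/asboolP; split.
- move=> r s t /asboolP [h1 h2] /asboolP [h3 h4]; apply/asboolP; split.
    by move=> y /h1 /h3.
  by move=> y Hy; rewrite h2 // h4 //; apply: h1.
- move=> A Atot.
  have [[a0 Aa0]|A0] := pselect (exists a, A a); last first.
    by exists t0 => s As; exfalso; apply: A0; exists s.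
  have comm : forall s t, A s -> A t -> extb (sval s) (sval t) \/ extb (sval t) (sval s).
    by move=> s t As At; case: (Atot s t As At) => /asboolP; [left|right].
  pose Du := [set y | exists t, A t /\ (sval t).1 y].
  pose fu (y : V) : R := match pselect (exists t, A t /\ (sval t).1 y) with
    | left H => (sval (sval (cid H))).2 y | right _ => 0 end.
  have fu_eq : forall t y, A t -> (sval t).1 y -> fu y = (sval t).2 y.
    move=> t y At ty; rewrite /fu; case: pselect => [H|[]]; last by exists t.
    case: cid => t' [At' t'y] /=.
    by case: (comm t' t At' At) => [[_ h]|[_ h]]; [rewrite h|rewrite h].
  have common : forall y z, Du y -> Du z -> exists t, A t /\ (sval t).1 y /\ (sval t).1 z.
    move=> y z [t [At ty]] [t' [At' t'z]].
    case: (comm t t' At At') => [[h _]|[h _]]; first by exists t'; split => //; split => //; apply: h.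
    by exists t; split => //; split => //; apply: h.
  have vu : valid (Du, fu).
    split; [|split; [|split; [|split]]] => /=.
    - split; first by exists a0; split => //; case: (svalP a0) => [[]].
      split.
        move=> y z Dy Dz; have [t [At [ty tz]]] := common _ _ Dy Dz.
        by exists t; split => //; case: (svalP t) => [[_ [h _]] _]; apply: h.
      move=> r y [t [At ty]]; exists t; split => //.
      by case: (svalP t) => [[_ [_ h]] _]; apply: h.
    - by move=> w Ww; exists a0; split => //; case: (svalP a0) => [_ [h _]]; apply: h.
    - split.
        move=> y z Dy Dz; have [t [At [ty tz]]] := common _ _ Dy Dz.
        case: (svalP t) => [[_ [DD _]] [_ [[h _] _]]].
        by rewrite !(fu_eq t) //; [apply: h | apply: DD].
      move=> r y [t [At ty]].
      case: (svalP t) => [[_ [_ DZ]] [_ [[_ h] _]]].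
      by rewrite !(fu_eq t) //; [apply: h | apply: DZ].
    - move=> w Ww; case: (svalP a0) => [_ [WD [_ [h _]]]].
      by rewrite (fu_eq a0) //; [apply: h | apply: WD].
    - move=> y [t [At ty]]; rewrite (fu_eq t) //.
      by case: (svalP t) => [_ [_ [_ [_ h]]]]; apply: h.
  exists (exist _ _ vu) => s As; apply/asboolP; split => /=.
    by move=> y sy; exists s.
  by move=> y sy; rewrite (fu_eq s).
- move=> [[D f] vD] /= Hmax.
  have Dall : forall y, D y.
    move=> y; apply: contrapT => Hy.
    have := Hmax (exist _ _ (D'_valid vD Hy)).
    have : Rl (exist _ _ vD) (exist _ _ (D'_valid vD Hy)).
      by apply/asboolP; apply: D'_ext.
    move=> h /(_ h) /asboolP [/= h2 _]; apply Hy; apply: h2 => /=.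
    exists 0, 1; split; [by case: (vD) => [[]]|by rewrite rc1 scale1r add0r].
  case: (vD) => [_ [_ [[fD fZ] [fW fp]]]] /=.
  exists f; split; first by move=> y z; apply: fD.
  split; first by move=> r y; apply: fZ.
  by split => [w Ww|y]; [exact: fW|apply: fp; exact: Dall].
Qed.

End RealHB.
Section CLemmas.
Variable R : realType.
Implicit Types (x y z : R[i]) (r s : R).
Lemma ReD x y : complex.Re (x + y) = complex.Re x + complex.Re y.
Proof. by case: x => a b; case: y => c d. Qed.
Lemma Re_rcM r z : complex.Re (rc r * z) = r * complex.Re z.
Proof. by case: z => a b /=; rewrite mul0r subr0. Qed.
Lemma Re_rc r : complex.Re (rc r) = r. Proof. by []. Qed.
Lemma Re_F (a b : R) : complex.Re (rc a - 'i%C * rc b) = a.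
Proof. by rewrite /rc /=; rewrite !mul0r !mul1r subr0 oppr0 addr0. Qed.
Lemma rc_Re_real z : z \is Num.real -> rc (complex.Re z) = z.
Proof. exact: RRe_real. Qed.
Lemma rc_Re_norm z : rc (complex.Re `|z|) = `|z|.
Proof. by apply: rc_Re_real; apply: normr_real. Qed.
Lemma rc_le r s : (rc r <= rc s) = (r <= s). Proof. exact: lecR. Qed.
Lemma rc_lt r s : (rc r < rc s) = (r < s). Proof. exact: ltcR. Qed.
Lemma rc_inj : injective (@rc R). Proof. by move=> r s []. Qed.
Lemma rc_ge0 r : (0 <= rc r) = (0 <= r). Proof. by rewrite -rc0 rc_le. Qed.
Lemma Re_le z : rc (complex.Re z) <= `|z|.
Proof.
apply: (le_trans _ (normc_ge_Re z)).
change (rc (complex.Re z) <= rc `|complex.Re z|); rewrite rc_le; exact: ler_norm.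
Qed.
Lemma normi : `|'i%C| = 1 :> R[i].
Proof. by rewrite normc_def /= expr0n expr1n /= add0r sqrtr1. Qed.
End CLemmas.

Section ComplexHB.
Variables (R : realType) (V : lmodType R[i]).
Variable p : V -> R.
Hypothesis p_add : forall x y, p (x + y) <= p x + p y.
Hypothesis p_cscal : forall (c : R[i]) x, rc (p (c *: x)) = `|c| * rc (p x).
Variables (W : set V) (f0 : V -> R[i]).
Hypotheses (W0 : W 0) (WD : forall x y, W x -> W y -> W (x + y))
  (WZ : forall c x, W x -> W (c *: x)).
Hypotheses (f0D : forall x y, W x -> W y -> f0 (x + y) = f0 x + f0 y)
  (f0Z : forall c x, W x -> f0 (c *: x) = c * f0 x)
  (f0p : forall w, W w -> `|f0 w| <= rc (p w)).

Lemma p_scal (r : R) x : 0 <= r -> p (rc r *: x) = r * p x.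
Proof.
move=> r0; apply: rc_inj; rewrite p_cscal rcM; congr (_ * _).
by rewrite ger0_norm // rc_ge0.
Qed.

Lemma p_ge0 x : 0 <= p x.
Proof.
have h0 : p 0 = 0 by apply: rc_inj; rewrite -(scale0r x) p_cscal normr0 mul0r rc0.
have hN : p (- x) = p x by apply: rc_inj; rewrite -scaleN1r p_cscal normrN normr1 mul1r.
have := p_add x (- x); rewrite subrr h0 hN; lra.
Qed.

Theorem complex_HB : exists F : V -> R[i],
  (forall x y, F (x + y) = F x + F y) /\ (forall c x, F (c *: x) = c * F x) /\
  (forall w, W w -> F w = f0 w) /\ (forall x, `|F x| <= rc (p x)).
Proof.
have [] := @real_HB R V p p_add p_scal W (fun w => complex.Re (f0 w)).
- by split => //; split => // r x Wx; apply: WZ.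
- split => [x y Wx Wy|r x Wx]; first by rewrite f0D // ReD.
  by rewrite f0Z // Re_rcM.
- move=> w Ww; rewrite -rc_le; apply: le_trans (Re_le _) _; exact: f0p.
move=> Phi [PhiD [PhiZ [PhiW Phip]]].
pose F v := rc (Phi v) - 'i%C * rc (Phi ('i%C *: v)).
have FD : forall x y, F (x + y) = F x + F y.
  by move=> x y; rewrite /F scalerDr !PhiD !rcD; ring.
have Fi : forall x, F ('i%C *: x) = 'i%C * F x.
  move=> x; rewrite /F scalerA.
  have -> : ('i%C : R[i]) * 'i%C = rc (-1 : R) by rewrite -expr2 sqr_i rcN rc1.
  rewrite PhiZ rcM rcN rc1.
  apply/eqP; rewrite -subr_eq0.
  have -> : rc (Phi ('i%C *: x)) - 'i%C * (- 1 * rc (Phi x)) -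
    'i%C * (rc (Phi x) - 'i%C * rc (Phi ('i%C *: x))) =
    rc (Phi ('i%C *: x)) * (1 + 'i%C ^+ 2) by ring.
  by rewrite sqr_i subrr mulr0.
have Fr : forall r x, F (rc r *: x) = rc r * F x.
  move=> r x; rewrite /F.
  have -> : ('i%C : R[i]) *: (rc r *: x) = rc r *: ('i%C *: x) by rewrite !scalerA mulrC.
  rewrite !PhiZ !rcM; ring.
have FZ : forall c x, F (c *: x) = c * F x.
  move=> c x.
  have -> : c = rc (complex.Re c) + 'i%C * rc (complex.Im c) := complexE c.
  rewrite scalerDl FD Fr -scalerA Fi Fr.
  ring.
exists F; split => //; split => //; split.
  move=> w Ww; rewrite /F !PhiW //; last by apply: WZ.
  rewrite f0Z // (mulrC 'i%C (f0 w)) ReiNIm rcN mulrN opprK.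
  by rewrite [in RHS](complexE (f0 w)).
move=> x; have [Fx0|Fxn0] := eqVneq (F x) 0.
  by rewrite Fx0 normr0 rc_ge0 p_ge0.
set z := F x.
have nz : `|z| != 0 by rewrite normr_eq0.
pose c := (z^*)%C / `|z|.
have Fc : F (c *: x) = `|z|.
  rewrite FZ /c mulrAC (mulrC _ z) -sqr_normc.
  by rewrite expr2 -mulrA mulfV // mulr1.
have nc : `|c| = 1.
  by rewrite /c normrM normcJ normfV normr_id mulfV.
have ReF : forall v, complex.Re (F v) = Phi v by move=> v; rewrite /F Re_F.
have : `|z| = rc (Phi (c *: x)).
  by rewrite -ReF Fc rc_Re_norm.
move=> ->; rewrite rc_le.
have := Phip (c *: x).
have -> // : p (c *: x) = p x.
by apply: rc_inj; rewrite p_cscal nc mul1r.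
Qed.
End ComplexHB.
Section HBApps.
Variable R : realType.

Definition seminorm (V : lmodType R[i]) (p : V -> R) :=
  (forall x y, p (x + y) <= p x + p y) /\
  (forall (c : R[i]) x, rc (p (c *: x)) = `|c| * rc (p x)).
Definition clin (V : lmodType R[i]) (g : V -> R[i]) :=
  (forall x y, g (x + y) = g x + g y) /\ (forall c x, g (c *: x) = c * g x).

Lemma rc_Re_nX (X : normedModType R[i]) (x : X) : rc (complex.Re `|x|) = `|x|.
Proof. exact: rc_Re_real (normr_real x). Qed.

Lemma seminorm0 (V : lmodType R[i]) (p : V -> R) : seminorm p -> p 0 = 0.
Proof.
move=> [_ h]; apply: rc_inj; rewrite -(scale0r (0 : V)) h normr0 mul0r rc0 //.
Qed.

Lemma clin0 (V : lmodType R[i]) (g : V -> R[i]) : clin g -> g 0 = 0.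
Proof. by move=> [_ h]; rewrite -(scale0r (0 : V)) h mul0r. Qed.

Lemma decomp2 (V : lmodType R[i]) (p1 p2 : V -> R) (g : V -> R[i]) :
  seminorm p1 -> seminorm p2 -> clin g ->
  (forall v, `|g v| <= rc (p1 v + p2 v)) ->
  exists g1 g2 : V -> R[i], clin g1 /\ clin g2 /\ (forall v, g v = g1 v + g2 v) /\
    (forall v, `|g1 v| <= rc (p1 v)) /\ (forall v, `|g2 v| <= rc (p2 v)).
Proof.
move=> [p1D p1Z] [p2D p2Z] [gD gZ] gb.
pose p (w : (V * V)%type) := p1 w.1 + p2 w.2.
have pD : forall x y, p (x + y) <= p x + p y.
  by move=> [x1 x2] [y1 y2]; rewrite /p /=; have := p1D x1 y1; have := p2D x2 y2; lra.
have pZ : forall (c : R[i]) x, rc (p (c *: x)) = `|c| * rc (p x).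
  by move=> c [x1 x2]; rewrite /p /= !rcD p1Z p2Z mulrDr.
have [] := @complex_HB R _ p pD pZ (fun w => w.2 = w.1) (fun w => g w.1).
- by [].
- by move=> [x1 x2] [y1 y2] /= -> ->.
- by move=> c [x1 x2] /= ->.
- by move=> [x1 x2] [y1 y2] /= _ _; apply: gD.
- by move=> c [x1 x2] /= _; apply: gZ.
- by move=> [x1 x2] /= ->; apply: gb.
move=> F [FD [FZ [FW Fp]]].
have p10 : p1 0 = 0 by apply: seminorm0; split.
have p20 : p2 0 = 0 by apply: seminorm0; split.
exists (fun x => F (x, 0)), (fun y => F (0, y)).
split; first split.
  by move=> x y; rewrite -FD; congr F; rewrite -[RHS]/(x + y, 0 + 0) addr0.
  by move=> c x; rewrite -FZ; congr F; rewrite -[RHS]/(c *: x, c *: 0) scaler0.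
split; first split.
  by move=> x y; rewrite -FD; congr F; rewrite -[RHS]/(0 + 0, x + y) addr0.
  by move=> c x; rewrite -FZ; congr F; rewrite -[RHS]/(c *: 0, c *: x) scaler0.
split.
  move=> v; rewrite -FD; rewrite -(FW (v, v)) //; congr F.
  by rewrite -[RHS]/(v + 0, 0 + v) addr0 add0r.
split => v.
  by have := Fp (v, 0); rewrite /p /= p20 addr0.
by have := Fp (0, v); rewrite /p /= p10 add0r.
Qed.

Lemma factor_dual (V : lmodType R[i]) (X : normedModType R[i]) (L : V -> X)
  (g : V -> R[i]) :
  (forall x y, L (x + y) = L x + L y) -> (forall c x, L (c *: x) = c *: L x) ->
  clin g -> (forall v, `|g v| <= `|L v|) ->
  exists h : X -> R[i], dual_elt h /\ forall v, g v = h (L v).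
Proof.
move=> LD LZ [gD gZ] gb.
pose p (x : X) := complex.Re `|x|.
have pD : forall x y, p (x + y) <= p x + p y.
  move=> x y; rewrite -rc_le rcD /p !rc_Re_nX; exact: ler_normD.
have pZ : forall (c : R[i]) x, rc (p (c *: x)) = `|c| * rc (p x).
  by move=> c x; rewrite /p !rc_Re_nX normrZ.
pose W := fun y : X => exists v, y = L v.
have gL : forall v v', L v = L v' -> g v = g v'.
  move=> v v' E; apply/eqP; rewrite -subr_eq0 -normr_le0.
  have -> : g v - g v' = g (v - v') by rewrite gD -scaleN1r gZ mulN1r.
  apply: le_trans (gb _) _.
  by rewrite -scaleN1r LD LZ E scaleN1r subrr normr0.
pose f0 (y : X) : R[i] := match pselect (W y) with
  | left H => g (sval (cid H)) | right _ => 0 end.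
have f0L : forall v, f0 (L v) = g v.
  move=> v; rewrite /f0; case: pselect => [H|[]]; last by exists v.
  by case: cid => v' /= E; apply: gL.
have [] := @complex_HB R X p pD pZ W f0.
- by exists 0; rewrite -(scale0r (0 : V)) LZ scale0r.
- by move=> _ _ [v ->] [w ->]; exists (v + w); rewrite LD.
- by move=> c _ [v ->]; exists (c *: v); rewrite LZ.
- by move=> _ _ [v ->] [w ->]; rewrite -LD !f0L gD.
- by move=> c _ [v ->]; rewrite -LZ !f0L gZ.
- by move=> _ [v ->]; rewrite f0L /p rc_Re_nX.
move=> F [FD [FZ [FW Fp]]].
exists F; split; last by move=> v; rewrite FW ?f0L //; exists v.
split => //; split => //.
exists 1; split => // x; rewrite mul1r; have := Fp x; by rewrite /p rc_Re_nX.
Qed.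
End HBApps.
Section NormR.
Variable R : realType.
Definition nr {X : normedModType R[i]} (x : X) : R := complex.Re `|x|.
Lemma nrE (X : normedModType R[i]) (x : X) : rc (nr x) = `|x|.
Proof. exact: rc_Re_nX. Qed.
Lemma nr_ge0 (X : normedModType R[i]) (x : X) : 0 <= nr x.
Proof. by rewrite -rc_ge0 nrE. Qed.
Lemma nrD (X : normedModType R[i]) (x y : X) : nr (x + y) <= nr x + nr y.
Proof. by rewrite -rc_le rcD !nrE ler_normD. Qed.
Lemma nrN (X : normedModType R[i]) (x : X) : nr (- x) = nr x.
Proof. by rewrite /nr normrN. Qed.
Lemma nr0 (X : normedModType R[i]) : nr (0 : X) = 0.
Proof. by rewrite /nr normr0. Qed.
Definition nrc (c : R[i]) : R := complex.Re `|c|.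
Lemma nrcE (c : R[i]) : rc (nrc c) = `|c|.
Proof. exact: rc_Re_norm. Qed.
Lemma nrc_ge0 (c : R[i]) : 0 <= nrc c.
Proof. by rewrite -rc_ge0 nrcE. Qed.
Lemma nrZ (X : normedModType R[i]) (c : R[i]) (x : X) : nr (c *: x) = nrc c * nr x.
Proof. by apply: rc_inj; rewrite rcM nrE nrcE nrE normrZ. Qed.
Lemma nrcM (c d : R[i]) : nrc (c * d) = nrc c * nrc d.
Proof. by apply: rc_inj; rewrite rcM !nrcE normrM. Qed.
Lemma nrcD (c d : R[i]) : nrc (c + d) <= nrc c + nrc d.
Proof. by rewrite -rc_le rcD !nrcE ler_normD. Qed.
Lemma nrcN (c : R[i]) : nrc (- c) = nrc c.
Proof. by rewrite /nrc normrN. Qed.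
Lemma nr_eq0 (X : normedModType R[i]) (x : X) : (nr x == 0) = (x == 0).
Proof. by rewrite -(inj_eq (@rc_inj R)) nrE rc0 normr_eq0. Qed.
Lemma nr_le (X Y : normedModType R[i]) (x : X) (y : Y) :
  (`|x| <= `|y|) = (nr x <= nr y).
Proof. by rewrite -!nrE rc_le. Qed.
Lemma nr_leM (X Y Z : normedModType R[i]) (x : X) (y : Y) (z : Z) :
  (`|x| <= `|y| * `|z|) = (nr x <= nr y * nr z).
Proof. by rewrite -!nrE -rcM rc_le. Qed.
Lemma nr_leMc (X Y : normedModType R[i]) (x : X) (M : R[i]) (y : Y) :
  0 <= M -> (`|x| <= M * `|y|) = (nr x <= complex.Re M * nr y).
Proof.
move=> M0; have MR : M \is Num.real by apply: ger0_real.
by rewrite -!nrE -{1}(rc_Re_real MR) -rcM rc_le.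
Qed.
Lemma nr_leMc3 (X Y Z : normedModType R[i]) (x : X) (M : R[i]) (y : Y) (z : Z) :
  0 <= M -> (`|x| <= M * `|y| * `|z|) = (nr x <= complex.Re M * nr y * nr z).
Proof.
move=> M0; have MR : M \is Num.real by apply: ger0_real.
by rewrite -!nrE -{1}(rc_Re_real MR) -!rcM rc_le.
Qed.
Lemma ReM0 (M : R[i]) : 0 <= M -> 0 <= complex.Re M.
Proof. by move=> M0; rewrite -rc_ge0 rc_Re_real // ger0_real. Qed.
Lemma pos_rc (e : R[i]) : 0 < e -> e = rc (complex.Re e) /\ 0 < complex.Re e.
Proof.
move=> e0; have eR : e \is Num.real by apply: gtr0_real.
by split; [rewrite rc_Re_real | rewrite -rc_lt rc0 rc_Re_real].
Qed.

Definition nt {I : Type} (le : I -> I -> Prop) (f : I -> R) :=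
  forall e : R, 0 < e -> exists i0, forall i, le i0 i -> f i < e.

Lemma net_to0_nt I (le : I -> I -> Prop) (u : I -> R[i]) :
  net_to0 le u <-> nt le (fun i => nrc (u i)).
Proof.
split => [h e e0|h e e0].
  have e0c : 0 < rc e by rewrite -rc0 rc_lt.
  have [i0 Hi] := h (rc e) e0c.
  by exists i0 => i /Hi; rewrite -nrcE rc_lt.
have [eE e0'] := pos_rc e0.
have [i0 Hi] := h _ e0'; exists i0 => i /Hi; by rewrite eE -nrcE rc_lt.
Qed.

Lemma nt_le I (le : I -> I -> Prop) (f g : I -> R) :
  (forall i, f i <= g i) -> nt le g -> nt le f.
Proof. by move=> fg h e e0; have [i0 Hi] := h e e0; exists i0 => i /Hi; apply: le_lt_trans. Qed.

Lemma nt_add I (le : I -> I -> Prop) (f g : I -> R) :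
  directed le -> nt le f -> nt le g -> nt le (fun i => f i + g i).
Proof.
move=> [_ [_ [letr ledir]]] hf hg e e0.
have e2 : 0 < e / 2 by rewrite divr_gt0.
have [i1 H1] := hf _ e2; have [i2 H2] := hg _ e2.
have [k [k1 k2]] := ledir i1 i2.
exists k => i ki; have := H1 i (letr _ _ _ k1 ki); have := H2 i (letr _ _ _ k2 ki).
lra.
Qed.

Lemma nt_scale I (le : I -> I -> Prop) (f : I -> R) (c : R) :
  0 <= c -> nt le f -> nt le (fun i => c * f i).
Proof.
move=> c0 hf e e0.
have ce : 0 < e / (c + 1) by rewrite divr_gt0 // ltr_wpDl.
have [i0 Hi] := hf _ ce; exists i0 => i /Hi h.
have c1 : 0 < c + 1 by rewrite ltr_wpDl.
have := ler_wpM2l c0 (ltW h).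
have : c * (e / (c + 1)) < e.
  rewrite mulrA ltr_pdivrMr // mulrDr mulr1; lra.
move=> h1 h2; exact: le_lt_trans h2 h1.
Qed.

Lemma nt_const0 I (le : I -> I -> Prop) (c : R) :
  directed le -> nt le (fun _ => c) -> c <= 0.
Proof.
move=> [[i0 _] [lerefl _]] h; rewrite leNgt; apply/negP => c0.
by have [i1 Hi] := h c c0; have := Hi i1 (lerefl i1); rewrite ltxx.
Qed.
End NormR.
Section Generic.
Lemma add_0 (X Y : zmodType) (f : X -> Y) :
  (forall x y, f (x + y) = f x + f y) -> f 0 = 0.
Proof. by move=> fD; apply: (addrI (f 0)); rewrite -fD !addr0. Qed.
Lemma add_opp (X Y : zmodType) (f : X -> Y) :
  (forall x y, f (x + y) = f x + f y) -> forall x, f (- x) = - f x.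
Proof. by move=> fD x; apply: (addrI (f x)); rewrite -fD !subrr (add_0 fD). Qed.
Lemma add_sub (X Y : zmodType) (f : X -> Y) :
  (forall x y, f (x + y) = f x + f y) -> forall x y, f (x - y) = f x - f y.
Proof. by move=> fD x y; rewrite fD (add_opp fD). Qed.
End Generic.
Section Generic2.
Variable R : realType.
Lemma closed_approx (X : normedModType R[i]) (S : set X) :
  (forall c, (forall e : R, 0 < e -> exists c', S c' /\ nr (c - c') < e) -> S c) ->
  closed S.
Proof.
move=> h; rewrite closedE => p Hp; apply: h => e e0; apply: contrapT => Hn; apply: Hp.
have e0c : 0 < rc e by rewrite -rc0 rc_lt.
apply: filterS (nbhsx_ballx p (rc e) e0c) => y; rewrite -ball_normE /= => hy Sy.
by apply: Hn; exists y; split => //; rewrite -rc_lt nrE.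
Qed.

Lemma bl_bound (X Y : normedModType R[i]) (f : X -> Y) :
  bounded_linear f -> exists M : R, 0 <= M /\ forall x, nr (f x) <= M * nr x.
Proof.
move=> [_ [M [M0 h]]]; exists (complex.Re M); split; first exact: ReM0.
by move=> x; rewrite -nr_leMc.
Qed.
Lemma bl_of (X Y : normedModType R[i]) (f : X -> Y) (M : R) :
  (forall x y, f (x + y) = f x + f y) -> (forall (k : R[i]) x, f (k *: x) = k *: f x) ->
  0 <= M -> (forall x, nr (f x) <= M * nr x) -> bounded_linear f.
Proof.
move=> fD fZ M0 h; split; first by split.
exists (rc M); split; first by rewrite rc_ge0.
by move=> x; rewrite nr_leMc ?rc_ge0 // Re_rc.
Qed.
Lemma bl_add (X Y : normedModType R[i]) (f : X -> Y) :
  bounded_linear f -> forall x y, f (x + y) = f x + f y.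
Proof. by case=> [[]]. Qed.
Lemma bl_scale (X Y : normedModType R[i]) (f : X -> Y) :
  bounded_linear f -> forall (k : R[i]) x, f (k *: x) = k *: f x.
Proof. by case=> [[]]. Qed.
Lemma bl_comp (X Y Z : normedModType R[i]) (f : Y -> Z) (g : X -> Y) :
  bounded_linear f -> bounded_linear g -> bounded_linear (fun x => f (g x)).
Proof.
move=> hf hg; have [Mf [Mf0 Hf]] := bl_bound hf; have [Mg [Mg0 Hg]] := bl_bound hg.
apply: (@bl_of _ _ _ (Mf * Mg)).
- by move=> x y; rewrite (bl_add hg) (bl_add hf).
- by move=> k x; rewrite (bl_scale hg) (bl_scale hf).
- exact: mulr_ge0.
- move=> x; apply: le_trans (Hf _) _; rewrite -mulrA; apply: ler_wpM2l => //.
Qed.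

Lemma de_add (X : normedModType R[i]) (f : X -> R[i]) :
  dual_elt f -> forall x y, f (x + y) = f x + f y.
Proof. by case. Qed.
Lemma de_scale (X : normedModType R[i]) (f : X -> R[i]) :
  dual_elt f -> forall (k : R[i]) x, f (k *: x) = k * f x.
Proof. by case=> _ []. Qed.
Lemma de_bound (X : normedModType R[i]) (f : X -> R[i]) :
  dual_elt f -> exists M : R, 0 <= M /\ forall x, nrc (f x) <= M * nr x.
Proof.
move=> [_ [_ [M [M0 h]]]]; exists (complex.Re M); split; first exact: ReM0.
move=> x; have := h x; have MR : M \is Num.real by apply: ger0_real.
by rewrite -nrcE -nrE -{1}(rc_Re_real MR) -rcM rc_le.
Qed.
Lemma de_sub (X : normedModType R[i]) (f : X -> R[i]) :
  dual_elt f -> forall x y, f (x - y) = f x - f y.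
Proof. by move=> h; apply: add_sub; apply: de_add. Qed.
Lemma de_of (X : normedModType R[i]) (f : X -> R[i]) (M : R) :
  (forall x y, f (x + y) = f x + f y) -> (forall (k : R[i]) x, f (k *: x) = k * f x) ->
  0 <= M -> (forall x, nrc (f x) <= M * nr x) -> dual_elt f.
Proof.
move=> fD fZ M0 h; split => //; split => //.
exists (rc M); split; first by rewrite rc_ge0.
by move=> x; rewrite -nrcE -nrE -rcM rc_le.
Qed.

Lemma nt_net (I : Type) (le : I -> I -> Prop) (u : I -> R[i]) (f : I -> R) :
  (forall i, nrc (u i) <= f i) -> nt le f -> net_to0 le u.
Proof. by move=> h hf; apply/net_to0_nt; apply: nt_le hf. Qed.
Lemma nt0 (I : Type) (le : I -> I -> Prop) : directed le -> nt le (fun _ => 0 : R).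
Proof. by move=> [[i0 _] _] e e0; exists i0. Qed.
End Generic2.
Section Main.
Variables (R : realType)
  (U : completeNormedModType R[i]) (mulU : U -> U -> U)
  (A : completeNormedModType R[i]) (mulA : A -> A -> A)
  (lUA : U -> A -> A) (rUA : A -> U -> A)
  (T : completeNormedModType R[i]) (tens : A -> A -> T)
  (Q : completeNormedModType R[i]) (q : T -> Q)
  (AJ : completeNormedModType R[i]) (qJ : A -> AJ) (mulJ : AJ -> AJ -> AJ)
  (lQ : A -> Q -> Q) (rQ : Q -> A -> Q) (lUQ : U -> Q -> Q) (rUQ : Q -> U -> Q)
  (omega : Q -> AJ).
Hypotheses
  (HU : banach_algebra mulU)
  (HA : banach_algebra mulA)
  (HUA : compatible_actions mulU mulA lUA rUA)
  (Htens : proj_tensor_product tens)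
  (Hq : quotient_map
          (closed_span (fun t => exists a al b,
              t = tens (rUA a al) b - tens a (lUA al b))) q)
  (HqJ : quotient_map
          (closed_ideal_gen mulA (fun x => exists a al b,
              x = mulA (rUA a al) b - mulA a (lUA al b))) qJ)
  (HmulJ : forall a b, mulJ (qJ a) (qJ b) = qJ (mulA a b))
  (HlQ : forall c, bounded_linear (lQ c) /\
           forall a b, lQ c (q (tens a b)) = q (tens (mulA c a) b))
  (HrQ : forall c, bounded_linear (fun x => rQ x c) /\
           forall a b, rQ (q (tens a b)) c = q (tens a (mulA b c)))
  (HlUQ : forall al, bounded_linear (lUQ al) /\
           forall a b, lUQ al (q (tens a b)) = q (tens (lUA al a) b))
  (HrUQ : forall al, bounded_linear (fun x => rUQ x al) /\
           forall a b, rUQ (q (tens a b)) al = q (tens a (rUA b al)))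
  (Homega : bounded_linear omega /\
           forall a b, omega (q (tens a b)) = qJ (mulA a b))
  (HQmod : banach_AU_module mulU mulA lUA rUA lQ rQ lUQ rUQ)
  (HQcomm : commutative_U_action lUQ rUQ).
Definition G := fun x => exists a al b, x = mulA (rUA a al) b - mulA a (lUA al b).
Definition J := closed_ideal_gen mulA G.

Lemma mulADl x x' y : mulA (x + x') y = mulA x y + mulA x' y.
Proof. by case: HA => [[[h _] _] _]. Qed.
Lemma mulAZl (k : R[i]) x y : mulA (k *: x) y = k *: mulA x y.
Proof. by case: HA => [[[_ [h _]] _] _]. Qed.
Lemma mulADr x y y' : mulA x (y + y') = mulA x y + mulA x y'.
Proof. by case: HA => [[[_ [_ [h _]]] _] _]. Qed.
Lemma mulAZr (k : R[i]) x y : mulA x (k *: y) = k *: mulA x y.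
Proof. by case: HA => [[[_ [_ [_ h]]] _] _]. Qed.
Lemma mulA_bd x y : nr (mulA x y) <= nr x * nr y.
Proof. by case: HA => [[_ h] _]; rewrite -nr_leM. Qed.
Lemma mulAA a b c : mulA a (mulA b c) = mulA (mulA a b) c.
Proof. by case: HA => _ h. Qed.
Lemma mulABl x x' y : mulA (x - x') y = mulA x y - mulA x' y.
Proof. exact: (add_sub (fun x => mulADl x ^~ y)). Qed.
Lemma mulABr x y y' : mulA x (y - y') = mulA x y - mulA x y'.
Proof. exact: (add_sub (mulADr x)). Qed.

Lemma qJD x y : qJ (x + y) = qJ x + qJ y.
Proof. by case: HqJ => [[h _] _]. Qed.
Lemma qJZ (k : R[i]) x : qJ (k *: x) = k *: qJ x.
Proof. by case: HqJ => [[_ h] _]. Qed.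
Lemma qJB x y : qJ (x - y) = qJ x - qJ y.
Proof. exact: (add_sub qJD). Qed.
Lemma qJ0 : qJ 0 = 0.
Proof. exact: (add_0 qJD). Qed.
Lemma qJ_onto y : exists x, qJ x = y.
Proof. by case: HqJ => [_ [h _]]. Qed.
Lemma qJ_ker x : qJ x = 0 <-> J x.
Proof. by case: HqJ => [_ [_ [h _]]]. Qed.
Lemma qJ_le x y : J y -> nr (qJ x) <= nr (x + y).
Proof. by case: HqJ => [_ [_ [_ h]]] Jy; rewrite -nr_le; apply: (h x).1. Qed.
Lemma qJ_le0 x : nr (qJ x) <= nr x.
Proof. by have := qJ_le x (proj1 (qJ_ker 0) qJ0); rewrite addr0. Qed.
Lemma qJ_approx x (e : R) : 0 < e -> exists y, J y /\ nr (x + y) < nr (qJ x) + e.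
Proof.
move=> e0; case: HqJ => [_ [_ [_ h]]].
have e0c : 0 < rc e by rewrite -rc0 rc_lt.
have [y [Jy Hy]] := (h x).2 _ e0c.
by exists y; split => //; rewrite -rc_lt rcD !nrE.
Qed.

Lemma J0 : J 0. Proof. by apply/qJ_ker; rewrite qJ0. Qed.
Lemma JD x y : J x -> J y -> J (x + y).
Proof. by move=> /qJ_ker hx /qJ_ker hy; apply/qJ_ker; rewrite qJD hx hy addr0. Qed.
Lemma JZ (k : R[i]) x : J x -> J (k *: x).
Proof. by move=> /qJ_ker hx; apply/qJ_ker; rewrite qJZ hx scaler0. Qed.
Lemma JN x : J x -> J (- x).
Proof. by move=> hx; rewrite -scaleN1r; apply: JZ. Qed.
Lemma JB x y : J x -> J y -> J (x - y).
Proof. by move=> hx hy; apply: JD => //; apply: JN. Qed.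
Lemma Jl a s : J s -> J (mulA a s).
Proof. by move=> Js S cS sS iS GS; apply: (iS a s (Js S cS sS iS GS)).1. Qed.
Lemma Jr a s : J s -> J (mulA s a).
Proof. by move=> Js S cS sS iS GS; apply: (iS a s (Js S cS sS iS GS)).2. Qed.
Lemma JG x : G x -> J x.
Proof. by move=> Gx S _ _ _ GS; apply: GS. Qed.

Lemma qJ_mul a b : nr (qJ (mulA a b)) <= nr (qJ a) * nr (qJ b).
Proof.
apply/ler_addgt0Pr => e e0.
set p := nr (qJ a); set s := nr (qJ b).
have p0 : 0 <= p by apply: nr_ge0.
have s0 : 0 <= s by apply: nr_ge0.
pose d := Num.min 1 (e / (p + s + 1)).
have d0 : 0 < d by rewrite lt_min ltr01 divr_gt0 //; lra.
have d1 : d <= 1 by rewrite ge_min lexx.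
have de : d * (p + s + 1) <= e.
  by rewrite -ler_pdivlMr ?ge_min ?lexx ?orbT //; lra.
have [y1 [Jy1 H1]] := qJ_approx a d0.
have [y2 [Jy2 H2]] := qJ_approx b d0.
have Jz : J (mulA y1 b + mulA a y2 + mulA y1 y2).
  refine (JD (JD (Jr b Jy1) (Jl a Jy2)) (Jl y1 Jy2)).
have E : mulA (a + y1) (b + y2) = mulA a b + (mulA y1 b + mulA a y2 + mulA y1 y2).
  by rewrite mulADl !mulADr -!addrA; congr (_ + _); rewrite addrCA.
have := qJ_le (mulA a b) Jz; rewrite -E => h.
have := mulA_bd (a + y1) (b + y2).
have n1 := nr_ge0 (a + y1); have n2 := nr_ge0 (b + y2).
have : nr (a + y1) * nr (b + y2) <= (p + d) * (s + d).
  by apply: ler_pM => //; apply: ltW.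
have : (p + d) * (s + d) <= p * s + e.
  have : (p + d) * (s + d) = p * s + d * (p + s + d) by ring.
  move=> ->; rewrite lerD2l; apply: le_trans de; apply: ler_wpM2l; [exact: ltW|lra].
lra.
Qed.

Lemma mulJ_bd x y : nr (mulJ x y) <= nr x * nr y.
Proof.
have [a <-] := qJ_onto x; have [b <-] := qJ_onto y.
by rewrite HmulJ qJ_mul.
Qed.
Lemma mulJDl x x' y : mulJ (x + x') y = mulJ x y + mulJ x' y.
Proof.
have [a <-] := qJ_onto x; have [a' <-] := qJ_onto x'; have [b <-] := qJ_onto y.
by rewrite -qJD !HmulJ mulADl qJD.
Qed.
Lemma mulJZl (k : R[i]) x y : mulJ (k *: x) y = k *: mulJ x y.
Proof.
have [a <-] := qJ_onto x; have [b <-] := qJ_onto y.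
by rewrite -qJZ !HmulJ mulAZl qJZ.
Qed.
Lemma mulJDr x y y' : mulJ x (y + y') = mulJ x y + mulJ x y'.
Proof.
have [a <-] := qJ_onto x; have [b <-] := qJ_onto y; have [b' <-] := qJ_onto y'.
by rewrite -qJD !HmulJ mulADr qJD.
Qed.
Lemma mulJZr (k : R[i]) x y : mulJ x (k *: y) = k *: mulJ x y.
Proof.
have [a <-] := qJ_onto x; have [b <-] := qJ_onto y.
by rewrite -qJZ !HmulJ mulAZr qJZ.
Qed.
Lemma mulJBl x x' y : mulJ (x - x') y = mulJ x y - mulJ x' y.
Proof. exact: (add_sub (fun x => mulJDl x ^~ y)). Qed.
Lemma mulJBr x y y' : mulJ x (y - y') = mulJ x y - mulJ x y'.
Proof. exact: (add_sub (mulJDr x)). Qed.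
Lemma mulJ0l y : mulJ 0 y = 0.
Proof. exact: (add_0 (fun x => mulJDl x ^~ y)). Qed.
Lemma nrc_norm (X : normedModType R[i]) (x : X) : nrc `|x| = nr x.
Proof. by rewrite /nrc normr_id. Qed.

Lemma frac_le (e x : R) : 0 < e -> 0 <= x -> e / (x + 1) * x <= e.
Proof.
move=> e0 x0; rewrite mulrAC ler_pdivrMr; last lra.
by apply: ler_wpM2l; lra.
Qed.

Lemma lQDl c c' x : lQ (c + c') x = lQ c x + lQ c' x.
Proof. by case: HQmod => [[[[h _] _] _] _]. Qed.
Lemma lQZl (k : R[i]) c x : lQ (k *: c) x = k *: lQ c x.
Proof. by case: HQmod => [[[[_ [h _]] _] _] _]. Qed.
Lemma lQDr c x x' : lQ c (x + x') = lQ c x + lQ c x'.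
Proof. by case: HQmod => [[[[_ [_ [h _]]] _] _] _]. Qed.
Lemma lQZr (k : R[i]) c x : lQ c (k *: x) = k *: lQ c x.
Proof. by case: HQmod => [[[[_ [_ [_ h]]] _] _] _]. Qed.
Lemma lQ_bd c x : nr (lQ c x) <= nr c * nr x.
Proof. by case: HQmod => [[[_ h] _] _]; rewrite -nr_leM. Qed.
Lemma rQDl x x' c : rQ (x + x') c = rQ x c + rQ x' c.
Proof. by case: HQmod => [[_ [[[h _] _] _]] _]. Qed.
Lemma rQ_bd x c : nr (rQ x c) <= nr x * nr c.
Proof. by case: HQmod => [[_ [[_ h] _]] _]; rewrite -nr_leM. Qed.
Lemma lQ_mul a b x : lQ (mulA a b) x = lQ a (lQ b x).
Proof. by case: HQmod => [[_ [_ [h _]]] _]. Qed.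
Lemma lQrQ a x b : lQ a (rQ x b) = rQ (lQ a x) b.
Proof. by case: HQmod => [[_ [_ [_ [_ h]]]] _]. Qed.
Lemma QM1 al a x : lUQ al (lQ a x) = lQ (lUA al a) x.
Proof. by case: HQmod => [_ [_ [h _]]]. Qed.
Lemma QM2 al a x : lQ a (lUQ al x) = lQ (rUA a al) x.
Proof. by case: HQmod => [_ [_ [_ [h _]]]]. Qed.
Lemma QM3 al a x : lQ a (rUQ x al) = rUQ (lQ a x) al.
Proof. by case: HQmod => [_ [_ [_ [_ [h _]]]]]. Qed.
Lemma lQBl c c' x : lQ (c - c') x = lQ c x - lQ c' x.
Proof. exact: (add_sub (fun c => lQDl c ^~ x)). Qed.
Lemma lQBr c x x' : lQ c (x - x') = lQ c x - lQ c x'.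
Proof. exact: (add_sub (lQDr c)). Qed.

Lemma q_bl : bounded_linear q.
Proof.
case: Hq => [[qD qZ] [_ [q0 qn]]].
apply: (@bl_of _ _ _ q 1 qD qZ ler01) => x; rewrite mul1r; have := (qn x).1 0 (proj1 (q0 0) (add_0 qD)).
by rewrite addr0 nr_le.
Qed.
Lemma q_onto y : exists x, q x = y.
Proof. by case: Hq => [_ [h _]]. Qed.

Lemma tens_uniq (Y : completeNormedModType R[i]) (L1 L2 : T -> Y) (phi : A -> A -> Y)
  (M : R[i]) : 0 <= M -> bilinear_map phi ->
  (forall a b, `|phi a b| <= M * `|a| * `|b|) ->
  bounded_linear L1 -> bounded_linear L2 ->
  (forall a b, L1 (tens a b) = phi a b) -> (forall a b, L2 (tens a b) = phi a b) ->
  L1 = L2.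
Proof.
move=> M0 bphi hb h1 h2 e1 e2; case: Htens => _ /(_ Y phi M M0 bphi hb) [L [_ [_ uL]]].
by rewrite (uL _ h1 e1) (uL _ h2 e2).
Qed.

Lemma omega_bl : bounded_linear omega. Proof. by case: Homega. Qed.
Lemma omega_t a b : omega (q (tens a b)) = qJ (mulA a b). Proof. by case: Homega. Qed.

Lemma mulJ_bl c : bounded_linear (mulJ c).
Proof.
apply: (@bl_of _ _ _ _ (nr c)).
- by move=> y y'; apply: mulJDr.
- by move=> k y; apply: mulJZr.
- exact: nr_ge0.
- by move=> y; apply: mulJ_bd.
Qed.

Lemma omega_l c x : omega (lQ c x) = mulJ (qJ c) (omega x).
Proof.
case: (HlQ c) => hlc hlt.
suff E : (fun t => omega (lQ c (q t))) = (fun t => mulJ (qJ c) (omega (q t))).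
  by have [t <-] := q_onto x; exact: (congr1 (fun F => F t) E).
apply: (@tens_uniq AJ _ _ (fun a b => qJ (mulA c (mulA a b))) `|c|).
- exact: normr_ge0.
- split; [move=> a a' b|split; [move=> k a b|split; [move=> a b b'|move=> k a b]]].
  + by rewrite mulADl mulADr qJD.
  + by rewrite mulAZl mulAZr qJZ.
  + by rewrite mulADr mulADr qJD.
  + by rewrite mulAZr mulAZr qJZ.
- move=> a b; rewrite nr_leMc3 ?normr_ge0 //.
  apply: le_trans (qJ_le0 _) _; apply: le_trans (mulA_bd _ _) _.
  rewrite -[complex.Re `|c|]/(nr c) -mulrA; apply: ler_wpM2l; first exact: nr_ge0.
  exact: mulA_bd.
- exact: bl_comp omega_bl (bl_comp hlc q_bl).
- exact: bl_comp (mulJ_bl _) (bl_comp omega_bl q_bl).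
- by move=> a b /=; rewrite hlt omega_t mulAA.
- by move=> a b /=; rewrite omega_t HmulJ.
Qed.

Lemma lQ_J c : J c -> forall x, lQ c x = 0.
Proof.
move=> Jc; pose S0 := fun c => forall x, lQ c x = 0.
apply: (Jc S0).
- apply: closed_approx => c0 h x; apply/eqP; rewrite -nr_eq0 eq_le nr_ge0 andbT.
  apply/ler_addgt0Pr => e e0; rewrite add0r.
  have d0 : 0 < e / (nr x + 1) by rewrite divr_gt0 //; have := nr_ge0 x; lra.
  have [c' [Sc' hc']] := h _ d0.
  have -> : lQ c0 x = lQ (c0 - c') x by rewrite lQBl Sc' subr0.
  apply: le_trans (lQ_bd _ _) _.
  have hx := nr_ge0 x.
  apply: le_trans (ler_wpM2r hx (ltW hc')) _.
  exact: frac_le.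
- split; first by move=> x; rewrite (add_0 (fun c => lQDl c ^~ x)).
  split; first by move=> a b ha hb x; rewrite lQDl ha hb addr0.
  by move=> k a ha x; rewrite lQZl ha scaler0.
- move=> a s hs; split => x; last by rewrite lQ_mul hs.
  by rewrite lQ_mul hs (add_0 (lQDr a)).
- move=> _ [a [al [b ->]]] x.
  by rewrite lQBl !lQ_mul -QM2 QM1 subrr.
Qed.

Definition sel (y : AJ) : A := sval (cid (qJ_onto y)).
Lemma selK y : qJ (sel y) = y. Proof. exact: (svalP (cid (qJ_onto y))). Qed.
Lemma lQ_sel a x : lQ (sel (qJ a)) x = lQ a x.
Proof.
apply/eqP; rewrite -subr_eq0 -lQBl lQ_J //; apply/qJ_ker; by rewrite qJB selK subrr.
Qed.

Lemma lQ_qbd a u : nr (lQ a u) <= nr (qJ a) * nr u.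
Proof.
apply/ler_addgt0Pr => e e0.
have hu := nr_ge0 u.
have d0 : 0 < e / (nr u + 1) by rewrite divr_gt0 //; lra.
have [y [Jy hy]] := qJ_approx a d0.
have -> : lQ a u = lQ (a + y) u by rewrite lQDl (lQ_J Jy) addr0.
apply: le_trans (lQ_bd _ _) _.
apply: le_trans (ler_wpM2r hu (ltW hy)) _.
rewrite mulrDl lerD2l mulrC (mulrC (nr u)); exact: frac_le.
Qed.

Lemma S_bl u : bounded_linear (fun y => lQ (sel y) u).
Proof.
apply: (@bl_of _ _ _ _ (nr u)).
- move=> y y'; rewrite -(selK y) -(selK y') -qJD !lQ_sel lQDl //.
- by move=> k y; rewrite -(selK y) -qJZ !lQ_sel lQZl.
- exact: nr_ge0.
- by move=> y; rewrite -{2}(selK y) mulrC; apply: lQ_qbd.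
Qed.

Lemma partA : module_pseudo_amenable mulA qJ mulJ omega lQ rQ ->
  cond_ii mulA lUA rUA qJ omega lQ rQ lUQ rUQ.
Proof.
move=> [I [le [u [dir [hai hcomm]]]]].
exists I, le, (fun l y => lQ (sel y) (u l)); split => //.
split; first by move=> l; apply: S_bl.
have z0 : forall f : I -> Q, (forall l, f l = 0) -> net_to0 le (fun l => `|f l|).
  move=> f hf; apply: (@nt_net _ _ _ _ (fun _ => 0)); last exact: nt0.
  by move=> l; rewrite hf normr0 /nrc normr0.
split.
  move=> a b; apply: z0 => l; by rewrite !lQ_sel lQ_mul subrr.
split.
  move=> a b; apply: (@nt_net _ _ _ _ (fun l => nr b * nrc `|lQ a (u l) - rQ (u l) a|)).
    move=> l; rewrite !lQ_sel lQ_mul -lQrQ -lQBr.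
    rewrite !nrc_norm; apply: lQ_bd.
  by apply: nt_scale; [exact: nr_ge0|apply/net_to0_nt; apply: hcomm].
split.
  move=> al b; apply: z0 => l; by rewrite !lQ_sel QM1 subrr.
split.
  move=> al b; apply: z0 => l.
  by rewrite !lQ_sel -QM2 HQcomm QM3 subrr.
move=> a; apply: (@nt_net _ _ _ _ (fun l => nrc `|mulJ (qJ a) (omega (u l)) - qJ a|)).
  by move=> l; rewrite lQ_sel omega_l.
by apply/net_to0_nt; apply: (hai a).2.
Qed.

Lemma partB : cond_ii mulA lUA rUA qJ omega lQ rQ lUQ rUQ ->
  cond_iii mulA lUA rUA qJ omega lQ rQ lUQ rUQ.
Proof.
move=> [I [le [S [dir [Sbl [c1 [c2 [c3 [c4 c5]]]]]]]]].
exists I, le, (fun l f y => f (S l y)); split => //.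
have key : forall (X : normedModType R[i]) (f : X -> R[i]) (g h : I -> X),
    dual_elt f -> net_to0 le (fun l => `|g l - h l|) ->
    net_to0 le (fun l => f (h l) - f (g l)).
  move=> X f g h df hn; have [M [M0 HM]] := de_bound df.
  apply: (@nt_net _ _ _ _ (fun l => M * nrc `|g l - h l|)).
    move=> l; rewrite -(de_sub df) nrc_norm -nrN opprB; exact: HM.
  by apply: nt_scale => //; apply/net_to0_nt.
split.
  move=> l; have [MS [MS0 HS]] := bl_bound (Sbl l).
  split.
    move=> f df; have [Mf [Mf0 Hf]] := de_bound df.
    apply: (@de_of _ _ _ (Mf * MS)).
    - by move=> x y; rewrite (bl_add (Sbl l)) (de_add df).
    - by move=> k x; rewrite (bl_scale (Sbl l)) (de_scale df).
    - exact: mulr_ge0.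
    - move=> x; apply: le_trans (Hf _) _; rewrite -mulrA; exact: ler_wpM2l.
  split; first by [].
  split; first by [].
  exists (rc MS); split; first by rewrite rc_ge0.
  move=> f M df M0 hM y.
  have MR : M \is Num.real by apply: ger0_real.
  have := hM (S l y); rewrite -nrcE -nrE -(rc_Re_real MR) -rcM rc_le => h1.
  rewrite -nrE -!rcM rc_le.
  apply: le_trans h1 _; rewrite (mulrC MS) -mulrA; apply: ler_wpM2l; first exact: ReM0.
  exact: HS.
split; first by move=> a f df b; apply: key => //; apply: c2.
split; first by move=> a f df b; apply: key => //; apply: c1.
split; first by move=> al f df b; apply: key => //; apply: c4.
split; first by move=> al f df b; apply: key => //; apply: c3.
move=> phi dphi b.
apply: key => //; move: (c5 b); congr net_to0; apply: funext => l; exact: distrC.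
Qed.
Lemma nt_of_net (I : Type) (le : I -> I -> Prop) (X : normedModType R[i]) (x : I -> X) :
  net_to0 le (fun i => `|x i|) -> nt le (fun i => nr (x i)).
Proof.
move=> /net_to0_nt h; apply: nt_le h => i; by rewrite nrc_norm.
Qed.

Lemma small_inv (e : R) : 0 < e -> exists N : nat, (N.+1%:R)^-1 < e.
Proof.
move=> e0; exists (Num.Def.trunc e^-1).
rewrite invf_plt ?posrE ?ltr0Sn //; exact: truncnS_gt.
Qed.

Lemma ev_list (X I : Type) (le : I -> I -> Prop) (P : X -> I -> Prop) :
  directed le -> (forall a, exists i0, forall i, le i0 i -> P a i) ->
  forall F : seq X, exists i0, forall i, le i0 i -> forall a, List.In a F -> P a i.
Proof.
move=> [[j0 _] [_ [letr ledir]]] h; elim => [|a F [i1 H1]].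
  by exists j0 => i _ a [].
have [i2 H2] := h a; have [k [k1 k2]] := ledir i1 i2.
exists k => i ki b /= [<-|bF]; first exact: H2 (letr _ _ _ k2 ki).
exact: H1 (letr _ _ _ k1 ki) _ bF.
Qed.

Lemma nt_and (I : Type) (le : I -> I -> Prop) (f g : I -> R) (e : R) :
  directed le -> 0 < e -> nt le f -> nt le g ->
  exists i0, forall i, le i0 i -> f i < e /\ g i < e.
Proof.
move=> [_ [_ [letr ledir]]] e0 hf hg.
have [i1 H1] := hf e e0; have [i2 H2] := hg e e0; have [k [k1 k2]] := ledir i1 i2.
exists k => i ki; split; [exact: H1 (letr _ _ _ k1 ki)|exact: H2 (letr _ _ _ k2 ki)].
Qed.

Definition approx_cond :=
  forall (F : seq A) (n : nat), exists u : Q, forall a, List.In a F ->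
    nr (mulJ (omega u) (qJ a) - qJ a) < (n.+1%:R)^-1 /\
    nr (mulJ (qJ a) (omega u) - qJ a) < (n.+1%:R)^-1 /\
    nr (lQ a u - rQ u a) < (n.+1%:R)^-1.

Lemma inv_mono (m n : nat) : (m <= n)%N -> (n.+1%:R : R)^-1 <= (m.+1%:R)^-1.
Proof. by move=> mn; rewrite lef_pV2 ?posrE ?ltr0Sn // ler_nat. Qed.

Lemma net_from_approx : approx_cond -> module_pseudo_amenable mulA qJ mulJ omega lQ rQ.
Proof.
move=> h.
pose I := (seq A * nat)%type.
pose le (i j : I) := (forall a, List.In a i.1 -> List.In a j.1) /\ (i.2 <= j.2)%N.
pose u (i : I) := sval (cid (h i.1 i.2)).
have hu : forall i a, List.In a i.1 -> _ := fun i => svalP (cid (h i.1 i.2)).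
have dir : directed le.
  split; first by exists ([::], 0%N).
  split; first by move=> i; split.
  split; first by move=> i j k [h1 h2] [h3 h4]; split; [move=> a /h1 /h3|exact: leq_trans h4].
  move=> i j; exists (i.1 ++ j.1, maxn i.2 j.2); split; split => /=.
  - by move=> a ai; apply: List.in_or_app; left.
  - exact: leq_maxl.
  - by move=> a aj; apply: List.in_or_app; right.
  - exact: leq_maxr.
have main : forall a, forall e : R, 0 < e -> exists i0, forall i, le i0 i ->
    nr (mulJ (omega (u i)) (qJ a) - qJ a) < e /\
    nr (mulJ (qJ a) (omega (u i)) - qJ a) < e /\ nr (lQ a (u i) - rQ (u i) a) < e.
  move=> a e e0; have [N hN] := small_inv e0.
  exists ([:: a], N) => i [h1 h2].
  have ai : List.In a i.1 by apply: h1; left.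
  have [r1 [r2 r3]] := hu i a ai.
  have hle := inv_mono h2.
  split; [|split]; [exact: (lt_trans (lt_le_trans r1 hle) hN)|
    exact: (lt_trans (lt_le_trans r2 hle) hN)|exact: (lt_trans (lt_le_trans r3 hle) hN)].
exists I, le, u; split => //; split.
  move=> a; split; apply/net_to0_nt => e e0; have [i0 Hi] := main a e e0;
    exists i0 => i /Hi [m1 [m2 m3]]; rewrite nrc_norm //.
move=> a; apply/net_to0_nt => e e0; have [i0 Hi] := main a e e0;
  exists i0 => i /Hi [m1 [m2 m3]]; rewrite nrc_norm //.
Qed.
Definition bnd (F : seq A) : R := foldr (fun a s => nr (qJ a) + s) 1 F.
Lemma bnd_gt0 F : 0 < bnd F.
Proof. elim: F => [|a F IH] /=; first exact: ltr01. by apply: ltr_wpDl => //; apply: nr_ge0. Qed.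
Lemma bnd_ge F a : List.In a F -> nr (qJ a) <= bnd F.
Proof.
elim: F => [[]|b F IH] /= [->|aF].
  by rewrite lerDl; apply: ltW; apply: bnd_gt0.
by apply: le_trans (IH aF) _; rewrite lerDr nr_ge0.
Qed.

Lemma partC1 : cond_ii mulA lUA rUA qJ omega lQ rQ lUQ rUQ ->
  has_central_approx_identity qJ mulJ -> approx_cond.
Proof.
move=> [I [le [S [dir [Sbl [c1 [c2 [c3 [c4 c5]]]]]]]]].
move=> [Ie [lee [e [dire [ecent eai]]]]] F n.
set eps : R := (n.+1%:R)^-1.
have eps0 : 0 < eps by rewrite invr_gt0 ltr0Sn.
clearbody eps.
have e2 : 0 < eps / 2 by rewrite divr_gt0.
have [k Hk] := @ev_list A Ie lee (fun a k => nr (mulJ (e k) (qJ a) - qJ a) < eps / 2 /\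
   nr (mulJ (qJ a) (e k) - qJ a) < eps / 2) dire
  (fun a => nt_and dire e2 (nt_of_net (eai a).1) (nt_of_net (eai a).2)) F.
have {Hk} Hk := Hk k (proj1 (proj2 dire) k).
set B := bnd F.
have B0 : 0 < B by apply: bnd_gt0.
have eB : 0 < eps / (2 * B) by rewrite divr_gt0 // mulr_gt0.
set eh := sel (e k).
have eh_e : qJ eh = e k by apply: selK.
have [l Hl] := @ev_list A I le (fun a l =>
   (nr (S l (qJ (mulA a eh)) - lQ a (S l (qJ eh))) < eps / 2 /\
    nr (S l (qJ (mulA eh a)) - rQ (S l (qJ eh)) a) < eps / 2) /\
   nr (omega (S l (qJ eh)) - e k) < eps / (2 * B)) dir
  (fun a => ltac:(have [i1 H1] := nt_and dir e2 (nt_of_net (c1 a eh)) (nt_of_net (c2 a eh));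
     have [i2 H2] := nt_of_net (c5 eh) eB;
     have [kk [kk1 kk2]] := (proj2 (proj2 (proj2 dir))) i1 i2;
     exists kk => i ki; split;
       [exact: H1 (proj1 (proj2 (proj2 dir)) _ _ _ kk1 ki)
       |rewrite -eh_e; exact: H2 (proj1 (proj2 (proj2 dir)) _ _ _ kk2 ki)])) F.
have {Hl} Hl := Hl l (proj1 (proj2 dir) l).
exists (S l (qJ eh)) => a aF.
have [[h1 h2] h3] := Hl a aF.
have [k1 k2] := Hk a aF.
have hB := bnd_ge aF.
have hq := nr_ge0 (qJ a).
have prod : nr (omega (S l (qJ eh)) - e k) * nr (qJ a) <= eps / 2.
  apply: le_trans (ler_wpM2r hq (ltW h3)) _.
  apply: le_trans (ler_wpM2l (ltW eB) hB) _.
  by rewrite -mulrA invfM -mulrA mulVf ?gt_eqF // mulr1.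
set u := S l (qJ eh) in h1 h2 h3 prod *.
split; last split.
- have -> : mulJ (omega u) (qJ a) - qJ a =
    mulJ (omega u - e k) (qJ a) + (mulJ (e k) (qJ a) - qJ a).
    by rewrite mulJBl addrA subrK.
  apply: le_lt_trans (nrD _ _) _.
  have := mulJ_bd (omega u - e k) (qJ a).
  move: k1 prod; lra.
- have -> : mulJ (qJ a) (omega u) - qJ a =
    mulJ (qJ a) (omega u - e k) + (mulJ (qJ a) (e k) - qJ a).
    by rewrite mulJBr addrA subrK.
  apply: le_lt_trans (nrD _ _) _.
  have := mulJ_bd (qJ a) (omega u - e k).
  rewrite mulrC; move: k2 prod; lra.
- have E : qJ (mulA a eh) = qJ (mulA eh a) by rewrite -!HmulJ eh_e ecent.
  have -> : lQ a u - rQ u a =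
    - (S l (qJ (mulA a eh)) - lQ a u) + (S l (qJ (mulA eh a)) - rQ u a).
    by rewrite E opprB addrA subrK.
  apply: le_lt_trans (nrD _ _) _; rewrite nrN; move: h1 h2; lra.
Qed.
Lemma de_comp (X Y : normedModType R[i]) (h : Y -> R[i]) (L : X -> Y) :
  dual_elt h -> bounded_linear L -> dual_elt (fun x => h (L x)).
Proof.
move=> dh bL; have [Mh [Mh0 Hh]] := de_bound dh; have [ML [ML0 HL]] := bl_bound bL.
apply: (@de_of _ _ _ (Mh * ML)).
- by move=> x y; rewrite (bl_add bL) (de_add dh).
- by move=> k x; rewrite (bl_scale bL) (de_scale dh).
- exact: mulr_ge0.
- move=> x; apply: le_trans (Hh _) _; rewrite -mulrA; exact: ler_wpM2l.
Qed.
Lemma de_addf (X : normedModType R[i]) (f g : X -> R[i]) :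
  dual_elt f -> dual_elt g -> dual_elt (fun x => f x + g x).
Proof.
move=> df dg; have [Mf [Mf0 Hf]] := de_bound df; have [Mg [Mg0 Hg]] := de_bound dg.
apply: (@de_of _ _ _ (Mf + Mg)).
- by move=> x y; rewrite (de_add df) (de_add dg) addrACA.
- by move=> k x; rewrite (de_scale df) (de_scale dg) mulrDr.
- exact: addr_ge0.
- move=> x; apply: le_trans (nrcD _ _) _; rewrite mulrDl; exact: lerD.
Qed.
Lemma de_scalef (X : normedModType R[i]) (k : R[i]) (f : X -> R[i]) :
  dual_elt f -> dual_elt (fun x => k * f x).
Proof.
move=> df; have [Mf [Mf0 Hf]] := de_bound df.
apply: (@de_of _ _ _ (nrc k * Mf)).
- by move=> x y; rewrite (de_add df) mulrDr.
- by move=> c x; rewrite (de_scale df) mulrCA.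
- exact: mulr_ge0 (nrc_ge0 _) Mf0.
- move=> x; rewrite nrcM -mulrA; apply: ler_wpM2l; [exact: nrc_ge0|exact: Hf].
Qed.
Lemma de0 (X : normedModType R[i]) : dual_elt (fun _ : X => 0 : R[i]).
Proof.
apply: (@de_of _ _ _ 0); [by move=> *; rewrite addr0|by move=> *; rewrite mulr0|exact: lexx|].
by move=> x; rewrite mul0r /nrc normr0.
Qed.
Lemma bl_subf (X Y : normedModType R[i]) (f g : X -> Y) :
  bounded_linear f -> bounded_linear g -> bounded_linear (fun x => f x - g x).
Proof.
move=> bf bg; have [Mf [Mf0 Hf]] := bl_bound bf; have [Mg [Mg0 Hg]] := bl_bound bg.
apply: (@bl_of _ _ _ _ (Mf + Mg)).
- by move=> x y; rewrite (bl_add bf) (bl_add bg) opprD addrACA.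
- by move=> k x; rewrite (bl_scale bf) (bl_scale bg) scalerBr.
- exact: addr_ge0.
- move=> x; apply: le_trans (nrD _ _) _; rewrite nrN mulrDl; exact: lerD.
Qed.
Lemma nrc_sub_le (X : normedModType R[i]) (h : X -> R[i]) :
  dual_elt h -> exists M : R, 0 <= M /\ forall x, nrc (h x) <= M * nr x.
Proof. exact: de_bound. Qed.

Lemma lQ_bl a : bounded_linear (lQ a). Proof. by case: (HlQ a). Qed.
Lemma rQ_bl a : bounded_linear (fun x => rQ x a). Proof. by case: (HrQ a). Qed.
Lemma mulJr_bl c : bounded_linear (fun y => mulJ y c).
Proof.
apply: (@bl_of _ _ _ _ (nr c)).
- by move=> y y'; apply: mulJDl.
- by move=> k y; apply: mulJZl.
- exact: nr_ge0.
- by move=> y; rewrite mulrC; apply: mulJ_bd.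
Qed.
Lemma omega0 : omega 0 = 0. Proof. exact: (add_0 (bl_add omega_bl)). Qed.

Section C2.
Variables (I : Type) (le : I -> I -> Prop) (Tn : I -> (Q -> R[i]) -> (AJ -> R[i])).
Hypotheses (dir : directed le) (Tbl : forall l, dual_bounded_linear (Tn l))
  (t1 : forall a f, dual_elt f -> forall b, net_to0 le (fun l =>
        Tn l (fun x => f (rQ x a)) (qJ b) - Tn l f (qJ (mulA b a))))
  (t2 : forall a f, dual_elt f -> forall b, net_to0 le (fun l =>
        Tn l (fun x => f (lQ a x)) (qJ b) - Tn l f (qJ (mulA a b))))
  (t5 : forall phi, dual_elt phi -> forall b, net_to0 le (fun l =>
        Tn l (fun x => phi (omega x)) (qJ b) - phi (qJ b))).
Variables (Ie : Type) (lee : Ie -> Ie -> Prop) (e : Ie -> AJ).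
Hypotheses (dire : directed lee) (ecent : forall l c, mulJ (e l) c = mulJ c (e l))
  (eai : forall a, net_to0 lee (fun l => `|mulJ (e l) (qJ a) - qJ a|) /\
               net_to0 lee (fun l => `|mulJ (qJ a) (e l) - qJ a|)).

Lemma Tadd l f g y : dual_elt f -> dual_elt g ->
  Tn l (fun x => f x + g x) y = Tn l f y + Tn l g y.
Proof. by move=> df dg; case: (Tbl l) => [_ [h _]]; apply: h. Qed.
Lemma Tscal l k f y : dual_elt f -> Tn l (fun x => k * f x) y = k * Tn l f y.
Proof. by move=> df; case: (Tbl l) => [_ [_ [h _]]]; apply: h. Qed.
Lemma Tzero l y : Tn l (fun _ => 0) y = 0.
Proof.
have -> : (fun _ : Q => 0 : R[i]) = (fun x => 0 * (fun _ : Q => 0 : R[i]) x).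
  by apply: funext => x; rewrite mul0r.
by rewrite Tscal ?mul0r //; apply: de0.
Qed.
Lemma Tsub l f g y : dual_elt f -> dual_elt g ->
  Tn l (fun x => f x - g x) y = Tn l f y - Tn l g y.
Proof.
move=> df dg.
have -> : (fun x => f x - g x) = (fun x => f x + (fun x => -1 * g x) x).
  by apply: funext => x; rewrite mulN1r.
by rewrite Tadd ?Tscal ?mulN1r //; apply: de_scalef.
Qed.

Local Notation V := (Q * R[i])%type.

Definition Pg (g : V -> R[i]) := exists psi : AJ -> R[i],
  dual_elt psi /\ dual_elt (fun u => g (u, 0)) /\
  (forall b, (forall c, mulJ (qJ b) c = mulJ c (qJ b)) ->
     net_to0 le (fun l => Tn l (fun u => g (u, 0)) (qJ b) - psi (qJ b))) /\
  net_to0 lee (fun k => psi (e k) + g (0, 1)).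

Lemma Pg_ext g1 g : Pg g1 -> (forall v, g v = g1 v) -> Pg g.
Proof.
move=> hp E; have -> // : g = g1 by apply: funext.
Qed.

Lemma nt_net_add (J0 : Type) (le0 : J0 -> J0 -> Prop) (x y : J0 -> R[i]) :
  directed le0 -> net_to0 le0 x -> net_to0 le0 y -> net_to0 le0 (fun i => x i + y i).
Proof.
move=> d hx hy; apply: (@nt_net _ _ _ _ (fun i => nrc (x i) + nrc (y i))).
  by move=> i; apply: nrcD.
by apply: nt_add => //; apply/net_to0_nt.
Qed.
Lemma nt_net_sub (J0 : Type) (le0 : J0 -> J0 -> Prop) (x y : J0 -> R[i]) :
  directed le0 -> net_to0 le0 x -> net_to0 le0 y -> net_to0 le0 (fun i => x i - y i).
Proof.
move=> d hx hy; apply: nt_net_add => //.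
by apply/net_to0_nt; apply: nt_le (proj1 (net_to0_nt _ _) hy) => i; rewrite nrcN.
Qed.

Lemma Pg_add g1 g2 g : Pg g1 -> Pg g2 -> (forall v, g v = g1 v + g2 v) -> Pg g.
Proof.
move=> [p1 [dp1 [dg1 [n1 m1]]]] [p2 [dp2 [dg2 [n2 m2]]]] E.
exists (fun y => p1 y + p2 y); split; first exact: de_addf.
have Eg : (fun u => g (u, 0)) = (fun u => g1 (u, 0) + g2 (u, 0)).
  by apply: funext => u; rewrite E.
split; first by rewrite Eg; apply: de_addf.
split.
  move=> b hb; rewrite Eg.
  have -> : (fun l => Tn l (fun u => g1 (u, 0) + g2 (u, 0)) (qJ b) - (p1 (qJ b) + p2 (qJ b)))
    = (fun l => (Tn l (fun u => g1 (u, 0)) (qJ b) - p1 (qJ b)) +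
                (Tn l (fun u => g2 (u, 0)) (qJ b) - p2 (qJ b))).
    by apply: funext => l; rewrite Tadd // opprD addrACA.
  by apply: nt_net_add => //; [apply: n1|apply: n2].
have -> : (fun k => p1 (e k) + p2 (e k) + g (0, 1)) =
  (fun k => (p1 (e k) + g1 (0, 1)) + (p2 (e k) + g2 (0, 1))).
  by apply: funext => k; rewrite E addrACA.
exact: nt_net_add.
Qed.

Lemma Pg_zero g : (forall v, g v = 0) -> Pg g.
Proof.
move=> h; exists (fun _ => 0); split; first exact: de0.
have Eg : (fun u => g (u, 0)) = (fun _ => 0) by apply: funext => u; rewrite h.
split; first by rewrite Eg; apply: de0.
split.
  move=> b _; rewrite Eg; apply: (@nt_net _ _ _ _ (fun _ => 0)); last exact: nt0.
  by move=> l; rewrite Tzero subr0 /nrc normr0.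
apply: (@nt_net _ _ _ _ (fun _ => 0)); last exact: nt0.
by move=> k; rewrite h addr0 /nrc normr0.
Qed.

Definition L1 a (v : V) : Q := lQ a v.1 - rQ v.1 a.
Definition L2 a (v : V) : AJ := mulJ (omega v.1) (qJ a) - v.2 *: qJ a.
Definition L3 a (v : V) : AJ := mulJ (qJ a) (omega v.1) - v.2 *: qJ a.

Lemma Pg_atom1 a h : dual_elt h -> Pg (fun v => h (L1 a v)).
Proof.
move=> dh; exists (fun _ => 0); split; first exact: de0.
have bl1 : bounded_linear (fun u => lQ a u - rQ u a) by apply: bl_subf; [apply: lQ_bl|apply: rQ_bl].
split; first exact: (de_comp dh bl1).
split.
  move=> b hb.
  have dhl : dual_elt (fun x => h (lQ a x)) by apply: de_comp dh (lQ_bl a).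
  have dhr : dual_elt (fun x => h (rQ x a)) by apply: de_comp dh (rQ_bl a).
  have -> : (fun l => Tn l (fun u => h (L1 a (u, 0))) (qJ b) - 0) =
    (fun l => (Tn l (fun x => h (lQ a x)) (qJ b) - Tn l h (qJ (mulA a b))) -
              (Tn l (fun x => h (rQ x a)) (qJ b) - Tn l h (qJ (mulA b a)))).
    apply: funext => l; rewrite subr0.
    have -> : qJ (mulA a b) = qJ (mulA b a) by rewrite -!HmulJ hb.
    have -> : (fun u => h (L1 a (u, 0))) = (fun x => h (lQ a x) - h (rQ x a)).
      by apply: funext => x; rewrite /L1 /= (de_sub dh).
    rewrite Tsub //; rewrite opprB addrA subrK //.
  by apply: nt_net_sub => //; [apply: t2|apply: t1].
apply: (@nt_net _ _ _ _ (fun _ => 0)); last exact: nt0.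
move=> k; rewrite add0r /L1 /=.
rewrite (add_0 (bl_add (lQ_bl a))) (add_0 (bl_add (rQ_bl a))) subrr.
by rewrite (add_0 (de_add dh)) /nrc normr0.
Qed.

Lemma Pg_atom2 a h : dual_elt h -> Pg (fun v => h (L2 a v)).
Proof.
move=> dh; pose psi y := h (mulJ y (qJ a)).
have dpsi : dual_elt psi by apply: de_comp dh (mulJr_bl (qJ a)).
have Eg : (fun u => h (L2 a (u, 0))) = (fun x => psi (omega x)).
  by apply: funext => x; rewrite /L2 /psi /= scale0r subr0.
exists psi; split => //; split; first by rewrite Eg; apply: de_comp dpsi omega_bl.
split; first by move=> b _; rewrite Eg; apply: t5.
have [M [M0 HM]] := de_bound dh.
apply: (@nt_net _ _ _ _ (fun k => M * nr (mulJ (e k) (qJ a) - qJ a))).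
  move=> k; rewrite /psi /L2 /= omega0 mulJ0l sub0r scale1r -(de_add dh) -/(qJ a - qJ a).
  exact: HM.
by apply: nt_scale => //; apply: nt_of_net; apply: (eai a).1.
Qed.

Lemma Pg_atom3 a h : dual_elt h -> Pg (fun v => h (L3 a v)).
Proof.
move=> dh; pose psi y := h (mulJ (qJ a) y).
have dpsi : dual_elt psi by apply: de_comp dh (mulJ_bl (qJ a)).
have Eg : (fun u => h (L3 a (u, 0))) = (fun x => psi (omega x)).
  by apply: funext => x; rewrite /L3 /psi /= scale0r subr0.
exists psi; split => //; split; first by rewrite Eg; apply: de_comp dpsi omega_bl.
split; first by move=> b _; rewrite Eg; apply: t5.
have [M [M0 HM]] := de_bound dh.
apply: (@nt_net _ _ _ _ (fun k => M * nr (mulJ (qJ a) (e k) - qJ a))).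
  move=> k; rewrite /psi /L3 /= omega0.
  rewrite (add_0 (bl_add (mulJ_bl (qJ a)))) sub0r scale1r -(de_add dh).
  exact: HM.
by apply: nt_scale => //; apply: nt_of_net; apply: (eai a).2.
Qed.

Lemma pairD (x y : Q) (s t : R[i]) : ((x, s) + (y, t) : V) = (x + y, s + t).
Proof. by []. Qed.
Lemma pairZ (c : R[i]) (x : Q) (s : R[i]) : (c *: ((x, s) : V)) = (c *: x, c * s).
Proof. by []. Qed.

Lemma L1D a v w : L1 a (v + w) = L1 a v + L1 a w.
Proof.
case: v => x s; case: w => y t; rewrite pairD /L1 /=.
by rewrite (bl_add (lQ_bl a)) rQDl opprD addrACA.
Qed.
Lemma L1Z a c v : L1 a (c *: v) = c *: L1 a v.
Proof.
case: v => x s; rewrite pairZ /L1 /=.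
by rewrite (bl_scale (lQ_bl a)) (bl_scale (rQ_bl a)) scalerBr.
Qed.
Lemma L2D a v w : L2 a (v + w) = L2 a v + L2 a w.
Proof.
case: v => x s; case: w => y t; rewrite pairD /L2 /=.
by rewrite (bl_add omega_bl) mulJDl scalerDl opprD addrACA.
Qed.
Lemma L2Z a c v : L2 a (c *: v) = c *: L2 a v.
Proof.
case: v => x s; rewrite pairZ /L2 /=.
by rewrite (bl_scale omega_bl) mulJZl scalerBr scalerA.
Qed.
Lemma L3D a v w : L3 a (v + w) = L3 a v + L3 a w.
Proof.
case: v => x s; case: w => y t; rewrite pairD /L3 /=.
by rewrite (bl_add omega_bl) mulJDr scalerDl opprD addrACA.
Qed.
Lemma L3Z a c v : L3 a (c *: v) = c *: L3 a v.
Proof.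
case: v => x s; rewrite pairZ /L3 /=.
by rewrite (bl_scale omega_bl) mulJZr scalerBr scalerA.
Qed.

Lemma sn_of (X : normedModType R[i]) (L : V -> X) :
  (forall v w, L (v + w) = L v + L w) -> (forall c v, L (c *: v) = c *: L v) ->
  seminorm (fun v => nr (L v)).
Proof.
move=> LD LZ; split => [v w|c v]; first by rewrite LD; apply: nrD.
by rewrite LZ nrE normrZ nrE.
Qed.
Lemma sn_add (p1 p2 : V -> R) : seminorm p1 -> seminorm p2 ->
  seminorm (fun v => p1 v + p2 v).
Proof.
move=> [h1 z1] [h2 z2]; split => [v w|c v].
  by have := h1 v w; have := h2 v w; lra.
by rewrite !rcD z1 z2 mulrDr.
Qed.
Lemma sn0 : seminorm (fun _ : V => 0 : R).
Proof. by split => [v w|c v]; [rewrite addr0|rewrite rc0 mulr0]. Qed.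

Definition q3 a (v : V) : R := nr (L1 a v) + nr (L2 a v) + nr (L3 a v).
Definition dF (F : seq A) (v : V) : R := foldr (fun a s => q3 a v + s) 0 F.

Lemma sn_q3 a : seminorm (q3 a).
Proof.
apply: sn_add; first apply: sn_add.
- by apply: sn_of; [apply: L1D|apply: L1Z].
- by apply: sn_of; [apply: L2D|apply: L2Z].
- by apply: sn_of; [apply: L3D|apply: L3Z].
Qed.
Lemma sn_dF F : seminorm (dF F).
Proof. elim: F => [|a F IH] /=; [exact: sn0|exact: sn_add (sn_q3 a) IH]. Qed.
Lemma q3_ge0 a v : 0 <= q3 a v.
Proof. by rewrite /q3; do 2?apply: addr_ge0; apply: nr_ge0. Qed.
Lemma dF_ge0 F v : 0 <= dF F v.
Proof. by elim: F => [|a F IH] /=; [exact: lexx|apply: addr_ge0 => //; apply: q3_ge0]. Qed.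
Lemma dF_each F v a : List.In a F -> q3 a v <= dF F v.
Proof.
elim: F => [[]|b F IH] /= [->|aF]; first by rewrite lerDl dF_ge0.
by apply: le_trans (IH aF) _; rewrite lerDr q3_ge0.
Qed.
Lemma dF_scale F c v : dF F (c *: v) = nrc c * dF F v.
Proof.
apply: rc_inj; rewrite rcM nrcE; exact: (proj2 (sn_dF F)).
Qed.

Lemma decF F : forall g : V -> R[i], clin g -> (forall v, `|g v| <= rc (dF F v)) -> Pg g.
Proof.
elim: F => [|a F IH] g cg hg.
  apply: Pg_zero => v; apply/eqP; rewrite -normr_le0; have := hg v; by rewrite rc0.
have [g1 [g4 [cg1 [cg4 [E1 [b1 b4]]]]]] :=
  @decomp2 R V (q3 a) (dF F) g (sn_q3 a) (sn_dF F) cg hg.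
have s12 : seminorm (fun v => nr (L1 a v) + nr (L2 a v)).
  by apply: sn_add; [apply: sn_of; [apply: L1D|apply: L1Z]|apply: sn_of; [apply: L2D|apply: L2Z]].
have s3 : seminorm (fun v => nr (L3 a v)) by apply: sn_of; [apply: L3D|apply: L3Z].
have [g12 [g3 [cg12 [cg3 [E2 [b12 b3]]]]]] :=
  @decomp2 R V _ _ g1 s12 s3 cg1 b1.
have s1 : seminorm (fun v => nr (L1 a v)) by apply: sn_of; [apply: L1D|apply: L1Z].
have s2 : seminorm (fun v => nr (L2 a v)) by apply: sn_of; [apply: L2D|apply: L2Z].
have [ga [gb [cga [cgb [E3 [ba bb]]]]]] :=
  @decomp2 R V _ _ g12 s1 s2 cg12 b12.
have [h1 [dh1 Eh1]] : exists h : Q -> R[i], dual_elt h /\ forall v, ga v = h (L1 a v).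
  apply: (@factor_dual R V Q (L1 a) ga) => //; [exact: L1D|exact: L1Z|].
  by move=> v; rewrite -nrE.
have [h2 [dh2 Eh2]] : exists h : AJ -> R[i], dual_elt h /\ forall v, gb v = h (L2 a v).
  apply: (@factor_dual R V AJ (L2 a) gb) => //; [exact: L2D|exact: L2Z|].
  by move=> v; rewrite -nrE.
have [h3 [dh3 Eh3]] : exists h : AJ -> R[i], dual_elt h /\ forall v, g3 v = h (L3 a v).
  apply: (@factor_dual R V AJ (L3 a) g3) => //; [exact: L3D|exact: L3Z|].
  by move=> v; rewrite -nrE.
apply: (Pg_add _ (IH _ cg4 b4) E1).
apply: (Pg_add _ (Pg_ext (Pg_atom3 a dh3) Eh3) E2).
exact: (Pg_add (Pg_ext (Pg_atom1 a dh1) Eh1) (Pg_ext (Pg_atom2 a dh2) Eh2) E3).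
Qed.

Lemma C2_approx : approx_cond.
Proof.
move=> F n.
set eps : R := (n.+1%:R)^-1.
have eps0 : 0 < eps by rewrite invr_gt0 ltr0Sn.
clearbody eps.
apply: contrapT => Hno.
pose g (v : V) := rc eps * v.2.
have cg : clin g.
  split => [[x s] [y t]|c [x s]]; first by rewrite pairD /g /= mulrDr.
  by rewrite pairZ /g /= mulrCA.
have hg : forall v, `|g v| <= rc (dF F v).
  move=> [u t]; rewrite /g /=.
  have [->|t0] := eqVneq t 0; first by rewrite mulr0 normr0 rc_ge0 dF_ge0.
  pose w : V := (t^-1 *: u, 1).
  have Ew : (u, t) = t *: w by rewrite /w pairZ scalerA mulfV // scale1r mulr1.
  have hw : eps <= dF F w.
    rewrite leNgt; apply/negP => hlt; apply: Hno; exists w.1 => a aF.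
    have := dF_each w aF; rewrite /q3.
    have n1 := nr_ge0 (L1 a w); have n2 := nr_ge0 (L2 a w); have n3 := nr_ge0 (L3 a w).
    rewrite /L1 /L2 /L3 /w /= scale1r => hq.
    split; [|split]; move: hq n1 n2 n3; rewrite /L1 /L2 /L3 /=; rewrite ?scale1r; lra.
  rewrite Ew dF_scale rcM nrcE normrM.
  have -> : `|rc eps| = rc eps by rewrite ger0_norm // rc_ge0 ltW.
  rewrite mulrC; apply: ler_wpM2l; first exact: normr_ge0.
  by rewrite rc_le.
have [psi [dpsi [dg0 [nb nk]]]] := decF cg hg.
have psi_e : forall k, psi (e k) = 0.
  move=> k; have Eb := selK (e k); set b := sel (e k) in Eb.
  have cb : forall c, mulJ (qJ b) c = mulJ c (qJ b) by move=> c; rewrite Eb ecent.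
  have := proj1 (net_to0_nt _ _) (nb b cb).
  have -> : (fun u => g (u, 0)) = (fun _ => 0) by apply: funext => u; rewrite /g mulr0.
  under eq_fun => l do rewrite Tzero sub0r nrcN Eb.
  move=> /(nt_const0 dir) h0.
  by apply/eqP; rewrite -normr_eq0 -nrcE -rc0 (inj_eq (@rc_inj R)) eq_le h0 nrc_ge0.
have := proj1 (net_to0_nt _ _) nk.
under eq_fun => k do rewrite psi_e add0r /g /= mulr1.
move=> /(nt_const0 dire).
have ep : 0 <= rc eps by rewrite rc_ge0 ltW.
rewrite /nrc (ger0_norm ep) /= => h; lra.
Qed.

End C2.

Lemma partC2 : cond_iii mulA lUA rUA qJ omega lQ rQ lUQ rUQ ->
  has_central_approx_identity qJ mulJ -> approx_cond.
Proof.
move=> [I [le [Tn [dir [Tbl [t1 [t2 [_ [_ t5]]]]]]]]].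
move=> [Ie [lee [e [dire [ecent eai]]]]].
exact: (@C2_approx I le Tn dir Tbl t1 t2 t5 Ie lee e dire ecent eai).
Qed.
Lemma main_thm :
  (module_pseudo_amenable mulA qJ mulJ omega lQ rQ ->
     cond_ii mulA lUA rUA qJ omega lQ rQ lUQ rUQ) /\
  (cond_ii mulA lUA rUA qJ omega lQ rQ lUQ rUQ ->
     cond_iii mulA lUA rUA qJ omega lQ rQ lUQ rUQ) /\
  (has_central_approx_identity qJ mulJ ->
    (module_pseudo_amenable mulA qJ mulJ omega lQ rQ <->
       cond_ii mulA lUA rUA qJ omega lQ rQ lUQ rUQ) /\
    (cond_ii mulA lUA rUA qJ omega lQ rQ lUQ rUQ <->
       cond_iii mulA lUA rUA qJ omega lQ rQ lUQ rUQ)).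
Proof.
split; first exact: partA.
split; first exact: partB.
move=> hc; split; split.
- exact: partA.
- by move=> h; apply: net_from_approx; apply: partC1 h hc.
- exact: partB.
- by move=> h; apply: partA; apply: net_from_approx; apply: partC2 h hc.
Qed.

End Main.

Theorem theorem3p11 (R : realType)
  (U : completeNormedModType R[i]) (mulU : U -> U -> U)
  (A : completeNormedModType R[i]) (mulA : A -> A -> A)
  (lUA : U -> A -> A) (rUA : A -> U -> A)
  (T : completeNormedModType R[i]) (tens : A -> A -> T)
  (Q : completeNormedModType R[i]) (q : T -> Q)
  (AJ : completeNormedModType R[i]) (qJ : A -> AJ) (mulJ : AJ -> AJ -> AJ)
  (lQ : A -> Q -> Q) (rQ : Q -> A -> Q) (lUQ : U -> Q -> Q) (rUQ : Q -> U -> Q)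
  (omega : Q -> AJ)
  (HU : banach_algebra mulU)
  (HA : banach_algebra mulA)
  (HUA : compatible_actions mulU mulA lUA rUA)
  (Htens : proj_tensor_product tens)
  (Hq : quotient_map
          (closed_span (fun t => exists a al b,
              t = tens (rUA a al) b - tens a (lUA al b))) q)
  (HqJ : quotient_map
          (closed_ideal_gen mulA (fun x => exists a al b,
              x = mulA (rUA a al) b - mulA a (lUA al b))) qJ)
  (HmulJ : forall a b, mulJ (qJ a) (qJ b) = qJ (mulA a b))
  (HlQ : forall c, bounded_linear (lQ c) /\
           forall a b, lQ c (q (tens a b)) = q (tens (mulA c a) b))
  (HrQ : forall c, bounded_linear (fun x => rQ x c) /\
           forall a b, rQ (q (tens a b)) c = q (tens a (mulA b c)))
  (HlUQ : forall al, bounded_linear (lUQ al) /\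
           forall a b, lUQ al (q (tens a b)) = q (tens (lUA al a) b))
  (HrUQ : forall al, bounded_linear (fun x => rUQ x al) /\
           forall a b, rUQ (q (tens a b)) al = q (tens a (rUA b al)))
  (Homega : bounded_linear omega /\
           forall a b, omega (q (tens a b)) = qJ (mulA a b))
  (HQmod : banach_AU_module mulU mulA lUA rUA lQ rQ lUQ rUQ)
  (HQcomm : commutative_U_action lUQ rUQ) :
  let i_ := module_pseudo_amenable mulA qJ mulJ omega lQ rQ in
  let ii_ := cond_ii mulA lUA rUA qJ omega lQ rQ lUQ rUQ in
  let iii_ := cond_iii mulA lUA rUA qJ omega lQ rQ lUQ rUQ in
  (i_ -> ii_) /\ (ii_ -> iii_) /\
  (has_central_approx_identity qJ mulJ -> (i_ <-> ii_) /\ (ii_ <-> iii_)).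
Proof.
move=> i_ ii_ iii_.
eapply main_thm; eassumption.
Qed.
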